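(* Let $\mathcal{X}$ and $\mathcal{Y}$ be arbitrary finite alphabets with $|\mathcal{X}|\geq 2$ and $|\mathcal{Y}|\geq 2$. Let $\mathcal{M}(\mathcal{X},\mathcal{Y})$ be the set of all functions $F_{\mathrm{opt}}$ which take as input a computable source distribution $P_X\in\mathcal{P}_{\mathrm{c}}(\mathcal{X})$, a computable distortion measure $d:\mathcal{X}\times\mathcal{Y}\to\mathbb{R}_{\geq0,\mathrm{c}}$ and a computable distortion level $D\in\mathbb{R}_{\mathrm{c}}$, and output some optimal test channel $P^{*}_{Y|X}\in\mathcal{P}_{\mathrm{opt}}(d,D,P_X)$. Then, provided the source probability $P_X$ is non-trivial, there exists no function $F_{\mathrm{opt}}\in\mathcal{M}(\mathcal{X},\mathcal{Y})$ that is Banach–Mazur computable (and hence none that is Turing computable).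
   Context: A real number $x$ is computable if there are recursive functions producing a sequence of rationals $r_k$ and a recursive modulus $e$ with $|x-r_k|\leq 2^{-N}$ for all $k\geq e(N)$; $\mathbb{R}_{\mathrm{c}}$ denotes the computable reals, and a sequence of reals (or of finite tuples/matrices of reals) is computable if the approximating rationals and modulus can be given uniformly by recursive functions of the index. $\mathcal{P}_{\mathrm{c}}(\mathcal{X})$ denotes the probability distributions on $\mathcal{X}$ with computable entries, and $\mathbb{R}_{\geq0,\mathrm{c}}$ the non-negative computable reals. A distortion measure is a function $d:\mathcal{X}\times\mathcal{Y}\to\mathbb{R}_{\geq 0}$. For a source distribution $P_X$, distortion measure $d$ and level $D$, the rate distortion function is $R(D)=\inf\{I(X;Y): P_{Y|X},\ \sum_{x,y}P_X(x)P_{Y|X}(y|x)d(x,y)\leq D\}$, the infimum over all transition probability matrices (test channels) $P_{Y|X}$, with $I(X;Y)$ the mutual information of the joint distribution $P_X P_{Y|X}$; $\mathcal{P}_{\mathrm{opt}}(d,D,P_X)$ is the set of test channels attaining this minimum. A function $F$ defined on tuples of computable reals (here $(P_X,d,D)$) with values in tuples of reals (here transition matrices) is Banach–Mazur computable if it maps every computable sequence of inputs to a computable sequence of outputs. *)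

(* Defs.v *)
(* classical reals R, finite alphabets X = {0..m-1}, Y = {0..n-1}. *)
From Stdlib Require Import Reals List Arith.
Import ListNotations.
Open Scope R_scope.

Inductive code : Type :=
| Zero : code
| Succ : code
| Proj : nat -> code
| Comp : code -> list code -> code
| Prec : code -> code -> code
| Mu   : code -> code.

Inductive eval : code -> list nat -> nat -> Prop :=
| eZero v : eval Zero v 0
| eSucc x v : eval Succ (x :: v) (S x)
| eProj i v : (i < length v)%nat -> eval (Proj i) v (nth i v 0%nat)
| eComp f gs v ws y : evals gs v ws -> eval f ws y -> eval (Comp f gs) v y
| ePrec0 f g v y : eval f v y -> eval (Prec f g) (0%nat :: v) y
| ePrecS f g k v r y :
    eval (Prec f g) (k :: v) r -> eval g (k :: r :: v) y ->
    eval (Prec f g) (S k :: v) y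
| eMu f v k :
    eval f (k :: v) 0%nat ->
    (forall l, (l < k)%nat -> exists z, eval f (l :: v) (S z)) ->
    eval (Mu f) v k
with evals : list code -> list nat -> list nat -> Prop :=
| esNil v : evals [] v []
| esCons g gs v y ys : eval g v y -> evals gs v ys -> evals (g :: gs) v (y :: ys).

Definition recursive (k : nat) (f : list nat -> nat) : Prop :=
  exists c : code, forall v, length v = k -> eval c v (f v).

Definition qof (s a b : nat) : R :=
  (if Nat.even s then 1 else -1) * INR a / INR (S b).

Definition comp_family (k : nat) (dom : list nat -> Prop) (x : list nat -> R) : Prop :=
  exists s a b e : list nat -> nat,
    recursive (S k) s /\ recursive (S k) a /\ recursive (S k) b /\
    recursive (S k) e /\
    forall v, length v = k -> dom v ->
      forall (N j : nat), (e (v ++ [N]) <= j)%nat ->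
        Rabs (x v - qof (s (v ++ [j])) (a (v ++ [j])) (b (v ++ [j]))) <= (/2) ^ N.

Definition comp_real (x : R) : Prop := comp_family 0 (fun _ => True) (fun _ => x).

Definition fsum (n : nat) (f : nat -> R) : R :=
  fold_right Rplus 0 (map f (seq 0 n)).

Definition is_distr (m : nat) (P : nat -> R) : Prop :=
  (forall i, (i < m)%nat -> 0 <= P i) /\ fsum m P = 1.

Definition comp_distr (m : nat) (P : nat -> R) : Prop :=
  is_distr m P /\ forall i, (i < m)%nat -> comp_real (P i).

Definition nontrivial (m : nat) (P : nat -> R) : Prop :=
  ~ (exists i, (i < m)%nat /\ P i = 1).

Definition comp_distortion (m n : nat) (d : nat -> nat -> R) : Prop :=
  forall i j, (i < m)%nat -> (j < n)%nat -> 0 <= d i j /\ comp_real (d i j).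

Definition is_channel (m n : nat) (W : nat -> nat -> R) : Prop :=
  forall i, (i < m)%nat ->
    (forall j, (j < n)%nat -> 0 <= W i j) /\ fsum n (W i) = 1.

Definition avg_distortion (m n : nat) (P : nat -> R) (d W : nat -> nat -> R) : R :=
  fsum m (fun i => fsum n (fun j => P i * W i j * d i j)).

Definition out_distr (m : nat) (P : nat -> R) (W : nat -> nat -> R) (j : nat) : R :=
  fsum m (fun i => P i * W i j).

(** Mutual information I(X;Y) of P_X P_{Y|X} (natural log; convention 0 log 0 = 0). *)
Definition mutinf (m n : nat) (P : nat -> R) (W : nat -> nat -> R) : R :=
  fsum m (fun i => fsum n (fun j =>
    let p := P i * W i j in
    if Req_EM_T p 0 then 0 else p * ln (W i j / out_distr m P W j))).

Definition feasible (m n : nat) (d : nat -> nat -> R) (D : R) (P : nat -> R)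
  (W : nat -> nat -> R) : Prop :=
  is_channel m n W /\ avg_distortion m n P d W <= D.

Definition P_opt (m n : nat) (d : nat -> nat -> R) (D : R) (P : nat -> R)
  (W : nat -> nat -> R) : Prop :=
  feasible m n d D P W /\
  forall W', feasible m n d D P W' -> mutinf m n P W <= mutinf m n P W'.

Definition OptFun (m n : nat) : Type :=
  (nat -> R) -> (nat -> nat -> R) -> R -> (nat -> nat -> R).

Definition admissible (m n : nat) (P : nat -> R) (d : nat -> nat -> R) (D : R) : Prop :=
  comp_distr m P /\ nontrivial m P /\ comp_distortion m n d /\ comp_real D /\
  exists W, P_opt m n d D P W.

Definition in_M (m n : nat) (F : OptFun m n) : Prop :=
  forall P d D, admissible m n P d D -> P_opt m n d D P (F P d D).

Definition BM_computable (m n : nat) (F : OptFun m n) : Prop :=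
  forall (Ps : nat -> nat -> R) (ds : nat -> nat -> nat -> R) (Ds : nat -> R),
    comp_family 2 (fun v => (nth 1 v 0 < m)%nat)
      (fun v => Ps (nth 0 v 0%nat) (nth 1 v 0%nat)) ->
    comp_family 3 (fun v => (nth 1 v 0 < m)%nat /\ (nth 2 v 0 < n)%nat)
      (fun v => ds (nth 0 v 0%nat) (nth 1 v 0%nat) (nth 2 v 0%nat)) ->
    comp_family 1 (fun _ => True) (fun v => Ds (nth 0 v 0%nat)) ->
    (forall k, admissible m n (Ps k) (ds k) (Ds k)) ->
    comp_family 3 (fun v => (nth 1 v 0 < m)%nat /\ (nth 2 v 0 < n)%nat)
      (fun v => F (Ps (nth 0 v 0%nat)) (ds (nth 0 v 0%nat)) (Ds (nth 0 v 0%nat))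
                  (nth 1 v 0%nat) (nth 2 v 0%nat)).

(* Main.v *)
From Stdlib Require Import Reals List Arith Lia Lra Setoid ClassicalEpsilon.
Require Import Defs.
Import ListNotations.

Open Scope nat_scope.

Section CI.
Variable P : code -> Prop.
Hypothesis HZ : P Zero.
Hypothesis HS : P Succ.
Hypothesis HP : forall i, P (Proj i).
Hypothesis HC : forall f gs, P f -> Forall P gs -> P (Comp f gs).
Hypothesis HR : forall f g, P f -> P g -> P (Prec f g).
Hypothesis HM : forall f, P f -> P (Mu f).
Fixpoint code_ind' (c : code) : P c :=
  match c with
  | Zero => HZ | Succ => HS | Proj i => HP i
  | Comp f gs => HC f gs (code_ind' f)
      ((fix G l := match l return Forall P l with
        | [] => Forall_nil _ | g :: l' => Forall_cons _ (code_ind' g) (G l') end) gs)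
  | Prec f g => HR f g (code_ind' f) (code_ind' g)
  | Mu f => HM f (code_ind' f)
  end.
End CI.

Lemma eval_det : forall c v y y', eval c v y -> eval c v y' -> y = y'.
Proof.
  induction c as [| |i|f gs IHf IHgs|f g IHf IHg|f IHf] using code_ind'; intros v y y' H1 H2.
  - inversion H1; inversion H2; subst; auto.
  - inversion H1; inversion H2; subst; congruence.
  - inversion H1; inversion H2; subst; auto.
  - inversion H1; subst. inversion H2; subst.
    assert (ws = ws0).
    { clear -IHgs H3 H4. revert ws ws0 H3 H4. induction IHgs as [|g gs' Hg Hgs IH]; intros ws ws0 A B.
      - inversion A; inversion B; auto.
      - inversion A; subst; inversion B; subst. f_equal; eauto. }
    subst; eauto.
  - revert y y' H1 H2. destruct v as [|n v]; intros y y' H1 H2; [inversion H1|].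
    revert y y' H1 H2; induction n; intros y y' H1 H2.
    + inversion H1; subst; inversion H2; subst; eauto.
    + inversion H1; subst; inversion H2; subst.
      assert (r = r0) by eauto. subst; eauto.
  - inversion H1; subst; inversion H2; subst.
    destruct (Nat.lt_trichotomy y y') as [Hl|[He|Hl]]; auto.
    + destruct (H5 _ Hl) as [z Hz]. specialize (IHf _ _ _ H0 Hz). discriminate.
    + destruct (H3 _ Hl) as [z Hz]. specialize (IHf _ _ _ H4 Hz). discriminate.
Qed.

Lemma rc_ext k f g : recursive k f -> (forall v, length v = k -> f v = g v) -> recursive k g.
Proof. intros [c Hc] E. exists c. intros v Hv. rewrite <- E by auto. auto. Qed.

Fixpoint constc (n : nat) : code := match n with 0 => Zero | S n => Comp Succ [constc n] end.
Lemma constc_eval n v : eval (constc n) v n.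
Proof. induction n; simpl. constructor. econstructor. constructor. eauto. constructor. constructor. Qed.

Lemma rc_const k n : recursive k (fun _ => n).
Proof. exists (constc n). intros; apply constc_eval. Qed.

Lemma rc_proj k i : recursive k (fun v => nth i v 0).
Proof.
  destruct (Nat.lt_ge_cases i k).
  - exists (Proj i). intros v Hv. constructor. lia.
  - exists Zero. intros v Hv. rewrite nth_overflow by lia. constructor.
Qed.

Lemma rc_succ : recursive 1 (fun v => S (nth 0 v 0)).
Proof. exists Succ. intros v Hv. destruct v as [|x [|]]; simpl in Hv; try lia. constructor. Qed.

Lemma rc_comp j k g fs : recursive j g -> Forall (recursive k) fs -> length fs = j ->
  recursive k (fun v => g (map (fun f => f v) fs)).
Proof.
  intros [cg Hg] HF Hl.
  assert (exists cs, forall v, length v = k -> evals cs v (map (fun f => f v) fs)) as [cs Hcs].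
  { clear Hl. induction HF as [|f fs' [cf Hf] _ [cs IH]].
    - exists []. intros; constructor.
    - exists (cf :: cs). intros; simpl; constructor; auto. }
  exists (Comp cg cs). intros v Hv. econstructor. apply Hcs; auto. apply Hg.
  rewrite length_map; auto.
Qed.

Lemma rc_prec k B St : recursive k B -> recursive (S (S k)) St ->
  recursive (S k) (fun v => nat_rect (fun _ => nat) (B (tl v)) (fun i acc => St (i :: acc :: tl v)) (hd 0 v)).
Proof.
  intros [cb Hb] [cs Hs]. exists (Prec cb cs). intros v Hv.
  destruct v as [|n v]; simpl in Hv; [lia|]. simpl. injection Hv as Hv.
  induction n; simpl.
  - constructor. auto.
  - econstructor. apply IHn. apply Hs. simpl; lia.
Qed.

Lemma map_nth_seq (v : list nat) : map (fun i => nth i v 0) (seq 0 (length v)) = v.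
Proof.
  induction v as [|a v IH]; simpl; auto. f_equal. rewrite <- seq_shift, List.map_map. simpl. exact IH.
Qed.

Lemma Forall_proj k l : Forall (recursive k) (map (fun i v => nth i v 0) l).
Proof. induction l; simpl; constructor; auto. apply rc_proj. Qed.

Lemma rc_reindex j k g (idx : list nat) : recursive j g -> length idx = j ->
  recursive k (fun v => g (map (fun i => nth i v 0) idx)).
Proof.
  intros Hg Hl.
  apply rc_ext with (f := fun v => g (map (fun f => f v) (map (fun i v => nth i v 0) idx))).
  apply (rc_comp j k g (map (fun i v => nth i v 0) idx)); auto.
  apply Forall_proj. rewrite length_map; auto.
  intros v _. f_equal. clear. induction idx; simpl; auto. f_equal; auto.
Qed.

Inductive ex : Type :=
| V (i : nat) | C (n : nat) | Sx (e : ex) | Rec (N B St : ex) | Sh (e : ex) | Sh1 (e : ex).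

Fixpoint den (e : ex) (env : list nat) : nat :=
  match e with
  | V i => nth i env 0
  | C n => n
  | Sx e => S (den e env)
  | Rec N B St => nat_rect (fun _ => nat) (den B env) (fun i acc => den St (i :: acc :: env)) (den N env)
  | Sh e => den e (tl env)
  | Sh1 e => den e (hd 0 env :: tl (tl env))
  end.

Lemma len0 (v : list nat) : length v = 0 -> v = [].
Proof. destruct v; simpl; auto; lia. Qed.

Theorem den_rec : forall e k, recursive k (den e).
Proof.
  induction e as [i|n|e IH|N IHN B IHB St IHS|e IH|e IH]; intros k.
  - apply rc_proj.
  - apply rc_const.
  - eapply rc_ext. apply (rc_comp 1 k (fun v => S (nth 0 v 0)) [den e]). apply rc_succ.
    constructor; auto. reflexivity. intros v _; reflexivity.
  - pose proof (rc_prec k (den B) (den St) (IHB k) (IHS (S (S k)))) as HP.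
    eapply rc_ext. apply (rc_comp (S k) k _ (den N :: map (fun i v => nth i v 0) (seq 0 k)) HP).
    constructor; auto. apply Forall_proj. simpl. rewrite length_map, length_seq; auto.
    intros v Hv. simpl. rewrite List.map_map. rewrite <- Hv, map_nth_seq. reflexivity.
  - destruct k as [|k].
    + eapply rc_ext. apply (rc_const 0 (den e [])). intros v Hv. apply len0 in Hv; subst; reflexivity.
    + eapply rc_ext. apply (rc_reindex k (S k) (den e) (seq 1 k)); auto. apply length_seq.
      intros v Hv. destruct v as [|a v]; simpl in Hv; [lia|]. injection Hv as Hv.
      simpl. f_equal. rewrite <- seq_shift, List.map_map. simpl. rewrite <- Hv, map_nth_seq. reflexivity.
  - destruct k as [|[|k]].
    + eapply rc_ext. apply (rc_const 0 (den e [0])). intros v Hv. apply len0 in Hv; subst; reflexivity.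
    + eapply rc_ext. apply (IH 1). intros v Hv. destruct v as [|a [|b v]]; simpl in Hv; try lia. reflexivity.
    + eapply rc_ext. apply (rc_reindex (S k) (S (S k)) (den e) (0 :: seq 2 k)); auto. simpl; rewrite length_seq; auto.
      intros v Hv. destruct v as [|a [|b v]]; simpl in Hv; try lia. injection Hv as Hv.
      simpl. f_equal. f_equal. rewrite <- !seq_shift, !List.map_map. simpl. rewrite <- Hv, map_nth_seq. reflexivity.
Qed.

Open Scope nat_scope.

Definition Add a b := Rec a b (Sx (V 1)).
Lemma den_Add a b env : den (Add a b) env = den a env + den b env.
Proof. unfold Add; cbn [den nat_rect nth hd tl]. induction (den a env); cbn [den nat_rect nth hd tl]; lia. Qed.

Definition Pred a := Rec a (C 0) (V 0).
Lemma den_Pred a env : den (Pred a) env = pred (den a env).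
Proof. unfold Pred; cbn [den nat_rect nth hd tl]. destruct (den a env); cbn [den nat_rect nth hd tl]; auto. Qed.

Definition Subt a b := Rec b a (Pred (V 1)).
Lemma den_Subt a b env : den (Subt a b) env = den a env - den b env.
Proof. unfold Subt; cbn [den nat_rect nth hd tl]. induction (den b env); cbn [den nat_rect nth hd tl]. lia. rewrite den_Pred. cbn [den nat_rect nth hd tl]. rewrite IHn. lia. Qed.

Definition Mul a b := Rec a (C 0) (Add (V 1) (Sh (Sh b))).
Lemma den_Mul a b env : den (Mul a b) env = den a env * den b env.
Proof. unfold Mul; cbn [den nat_rect nth hd tl]. induction (den a env); cbn [den nat_rect nth hd tl]; auto. rewrite den_Add. cbn [den nat_rect nth hd tl]. rewrite IHn. lia. Qed.

Definition ifz (n a b : nat) := match n with 0 => a | S _ => b end.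
Definition Ifz c a b := Rec c a (Sh (Sh b)).
Lemma den_Ifz c a b env : den (Ifz c a b) env = ifz (den c env) (den a env) (den b env).
Proof. unfold Ifz, ifz; cbn [den nat_rect nth hd tl]. destruct (den c env); cbn [den nat_rect nth hd tl]; auto. Qed.

Definition b2n (b : bool) := if b then 1 else 0.
Definition Eqb a b := Ifz (Add (Subt a b) (Subt b a)) (C 1) (C 0).
Lemma den_Eqb a b env : den (Eqb a b) env = b2n (den a env =? den b env).
Proof.
  unfold Eqb. rewrite den_Ifz, den_Add, !den_Subt. cbn [den nat_rect nth hd tl].
  destruct (Nat.eqb_spec (den a env) (den b env)).
  - replace (den a env - den b env + (den b env - den a env)) with 0 by lia. reflexivity.
  - destruct (den a env - den b env + (den b env - den a env)) eqn:E; [lia|reflexivity].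
Qed.

Definition Leb a b := Ifz (Subt a b) (C 1) (C 0).
Lemma den_Leb a b env : den (Leb a b) env = b2n (den a env <=? den b env).
Proof.
  unfold Leb. rewrite den_Ifz, den_Subt. cbn [den nat_rect nth hd tl].
  destruct (Nat.leb_spec (den a env) (den b env)).
  - replace (den a env - den b env) with 0 by lia. reflexivity.
  - destruct (den a env - den b env) eqn:E; [lia|reflexivity].
Qed.

Definition NotE a := Ifz a (C 1) (C 0).
Lemma den_Not a env : den (NotE a) env <> 0 <-> den a env = 0.
Proof. unfold NotE. rewrite den_Ifz. cbn [den]. destruct (den a env); simpl; split; auto; congruence. Qed.

Definition AndE a b := Ifz a (C 0) (Ifz b (C 0) (C 1)).
Lemma den_And a b env : den (AndE a b) env <> 0 <-> den a env <> 0 /\ den b env <> 0.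
Proof. unfold AndE. rewrite !den_Ifz. cbn [den]. destruct (den a env), (den b env); simpl; split; intuition congruence. Qed.

Lemma den_And_val a b env : den (AndE a b) env =
  if den a env =? 0 then 0 else if den b env =? 0 then 0 else 1.
Proof. unfold AndE. rewrite !den_Ifz. cbn [den]. destruct (den a env), (den b env); reflexivity. Qed.

Definition OrE a b := Ifz a b (C 1).
Lemma den_Or a b env : den (OrE a b) env <> 0 <-> den a env <> 0 \/ den b env <> 0.
Proof. unfold OrE. rewrite !den_Ifz. cbn [den]. destruct (den a env), (den b env); simpl; split; intuition congruence. Qed.

Lemma den_Eqb_t a b env : den (Eqb a b) env <> 0 <-> den a env = den b env.
Proof. rewrite den_Eqb. destruct (Nat.eqb_spec (den a env) (den b env)); unfold b2n; split; auto; congruence. Qed.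
Lemma den_Leb_t a b env : den (Leb a b) env <> 0 <-> den a env <= den b env.
Proof. rewrite den_Leb. destruct (Nat.leb_spec (den a env) (den b env)); unfold b2n; split; auto; try congruence; lia. Qed.

Definition Bex B P := Rec B (C 0) (Ifz (V 1) (Sh1 P) (C 1)).
Lemma den_Bex B P env : den (Bex B P) env <> 0 <-> exists i, i < den B env /\ den P (i :: env) <> 0.
Proof.
  unfold Bex. cbn [den]. induction (den B env) as [|n IH]; cbn [nat_rect].
  - split; [congruence|]. intros [i [Hi _]]; lia.
  - rewrite den_Ifz. cbn [den nth hd tl]. destruct (nat_rect _ _ _ n) eqn:E; cbn [ifz].
    + split.
      * intros H. exists n; split; auto.
      * intros [i [Hi Hp]]. destruct (Nat.eq_dec i n); subst; auto.
        exfalso. assert (0 <> 0) by (apply IH; exists i; split; [lia|auto]). auto.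
    + split; [|congruence]. intros _. destruct IH as [IH _].
      destruct IH as [i [Hi Hp]]; [congruence|]. exists i; split; auto.
Qed.

Definition Ball B P := NotE (Bex B (NotE P)).
Lemma den_Ball B P env : den (Ball B P) env <> 0 <-> forall i, i < den B env -> den P (i :: env) <> 0.
Proof.
  unfold Ball. rewrite den_Not. split.
  - intros H i Hi Hp. assert (den (Bex B (NotE P)) env <> 0). { apply den_Bex. exists i. split; auto. apply den_Not; auto. } auto.
  - intros H. destruct (den (Bex B (NotE P)) env) eqn:E; auto. exfalso.
    assert (den (Bex B (NotE P)) env <> 0) as H' by congruence. apply den_Bex in H'.
    destruct H' as [i [Hi Hp]]. apply den_Not in Hp. apply (H i Hi Hp).
Qed.

Fixpoint cnt (n : nat) (p : nat -> nat) : nat :=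
  match n with 0 => 0 | S n => cnt n p + (if p n =? 0 then 0 else 1) end.

Definition Count B P := Rec B (C 0) (Add (V 1) (Ifz (Sh1 P) (C 0) (C 1))).
Lemma den_Count B P env : den (Count B P) env = cnt (den B env) (fun i => den P (i :: env)).
Proof.
  unfold Count. cbn [den nat_rect nth hd tl]. induction (den B env) as [|n IH]; cbn [den nat_rect nth hd tl]; auto.
  rewrite den_Add, den_Ifz. cbn [den nat_rect nth hd tl]. rewrite IH. simpl. destruct (den P (n :: env)); simpl; auto.
Qed.

Lemma cnt_ext n p q : (forall i, p i = q i) -> cnt n p = cnt n q.
Proof. intros H; induction n; cbn [cnt]; auto. rewrite IHn, H; auto. Qed.

Lemma cnt_min n p s : (forall i, p i <> 0 <-> i < s) -> cnt n p = Nat.min n s.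
Proof.
  intros H. induction n; [reflexivity|]. cbn [cnt].
  rewrite IHn. destruct (Nat.eqb_spec (p n) 0) as [E|E].
  - assert (~ n < s) by (intro X; apply H in X; auto). lia.
  - apply H in E. lia.
Qed.

Fixpoint tri (n : nat) : nat := match n with 0 => 0 | S n => tri n + S n end.
Definition Tri a := Rec a (C 0) (Add (V 1) (Sx (V 0))).
Lemma den_Tri a env : den (Tri a) env = tri (den a env).
Proof. unfold Tri; cbn [den]. induction (den a env); cbn [nat_rect tri]; auto. rewrite den_Add. cbn [den nth]. lia. Qed.

Lemma tri_mono i j : i <= j -> tri i <= tri j.
Proof. induction 1; simpl; lia. Qed.
Lemma tri_ge n : n <= tri n.
Proof. induction n; simpl; lia. Qed.

Definition cp x y := tri (x + y) + y.
Definition cs z := cnt z (fun i => b2n (tri (S i) <=? z)).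
Definition csnd z := z - tri (cs z).
Definition cfst z := cs z - csnd z.

Lemma tri_ex z : exists s, tri s <= z < tri (S s).
Proof.
  induction z.
  - exists 0; simpl; lia.
  - destruct IHz as [s Hs]. destruct (Nat.eq_dec (S z) (tri (S s))).
    + exists (S s). simpl in *. lia.
    + exists s. simpl in *; lia.
Qed.

Lemma cs_spec z s : tri s <= z < tri (S s) -> cs z = s.
Proof.
  intros Hs. unfold cs. rewrite (cnt_min _ _ s).
  - assert (s <= z) by (pose proof (tri_ge s); lia). lia.
  - intros i. destruct (Nat.leb_spec (tri (S i)) z); simpl.
    + split; auto. intros _. destruct (Nat.lt_ge_cases i s); auto.
      pose proof (tri_mono (S s) (S i)). lia.
    + split; [congruence|]. intros Hi. pose proof (tri_mono (S i) s). lia.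
Qed.

Lemma cp_fst x y : cfst (cp x y) = x.
Proof.
  assert (cs (cp x y) = x + y) as E.
  { apply cs_spec. unfold cp. simpl. lia. }
  unfold cfst, csnd. rewrite E. unfold cp. lia.
Qed.
Lemma cp_snd x y : csnd (cp x y) = y.
Proof.
  assert (cs (cp x y) = x + y) as E.
  { apply cs_spec. unfold cp. simpl. lia. }
  unfold csnd. rewrite E. unfold cp. lia.
Qed.
Lemma cp_surj z : cp (cfst z) (csnd z) = z.
Proof.
  destruct (tri_ex z) as [s Hs]. pose proof (cs_spec z s Hs) as E.
  unfold cp, cfst, csnd. rewrite E. simpl in Hs.
  replace (s - (z - tri s) + (z - tri s)) with s by lia. lia.
Qed.
Lemma csnd_le z : csnd z <= z.
Proof. unfold csnd. lia. Qed.
Lemma cp_ge_r x y : y <= cp x y.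
Proof. unfold cp. lia. Qed.
Lemma cp_ge_l x y : x <= cp x y.
Proof. unfold cp. pose proof (tri_ge (x+y)). lia. Qed.
Lemma cp00 : cp 0 0 = 0.
Proof. reflexivity. Qed.
Lemma cfst0 : cfst 0 = 0.
Proof. rewrite <- cp00, cp_fst. reflexivity. Qed.
Lemma csnd0 : csnd 0 = 0.
Proof. rewrite <- cp00, cp_snd. reflexivity. Qed.

Definition PairE a b := Add (Tri (Add a b)) b.
Lemma den_Pair a b env : den (PairE a b) env = cp (den a env) (den b env).
Proof. unfold PairE, cp. rewrite den_Add, den_Tri, den_Add. reflexivity. Qed.

Definition CsE z := Count z (Leb (Tri (Sx (V 0))) (Sh z)).
Lemma den_Cs z env : den (CsE z) env = cs (den z env).
Proof.
  unfold CsE, cs. rewrite den_Count. apply cnt_ext. intros i.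
  rewrite den_Leb, den_Tri. reflexivity.
Qed.

Definition SndE z := Subt z (Tri (CsE z)).
Definition FstE z := Subt (CsE z) (SndE z).
Lemma den_Snd z env : den (SndE z) env = csnd (den z env).
Proof. unfold SndE, csnd. rewrite den_Subt, den_Tri, den_Cs. reflexivity. Qed.
Lemma den_Fst z env : den (FstE z) env = cfst (den z env).
Proof. unfold FstE, cfst. rewrite den_Subt, den_Snd, den_Cs. reflexivity. Qed.

Definition tlN z := csnd (pred z).
Definition hdN z := cfst (pred z).
Fixpoint iterN n z := match n with 0 => z | S n => tlN (iterN n z) end.
Definition nthN i z := hdN (iterN i z).
Definition lenN z := cnt z (fun i => iterN i z).
Definition consN a z := S (cp a z).

Fixpoint encL (l : list nat) : nat := match l with [] => 0 | a :: l => consN a (encL l) end.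

Definition TlE z := SndE (Pred z).
Definition HdE z := FstE (Pred z).
Definition IterE n z := Rec n z (TlE (V 1)).
Definition NthE i z := HdE (IterE i z).
Definition LenE z := Count z (IterE (V 0) (Sh z)).
Definition ConsE a z := Sx (PairE a z).

Lemma den_Tl z env : den (TlE z) env = tlN (den z env).
Proof. unfold TlE, tlN. rewrite den_Snd, den_Pred. reflexivity. Qed.
Lemma den_Hd z env : den (HdE z) env = hdN (den z env).
Proof. unfold HdE, hdN. rewrite den_Fst, den_Pred. reflexivity. Qed.
Lemma den_Iter n z env : den (IterE n z) env = iterN (den n env) (den z env).
Proof. unfold IterE. cbn [den]. induction (den n env); cbn [nat_rect iterN]; auto. rewrite den_Tl. cbn [den nth]. congruence. Qed.
Lemma den_Nth i z env : den (NthE i z) env = nthN (den i env) (den z env).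
Proof. unfold NthE, nthN. rewrite den_Hd, den_Iter. reflexivity. Qed.
Lemma den_Len z env : den (LenE z) env = lenN (den z env).
Proof. unfold LenE, lenN. rewrite den_Count. apply cnt_ext. intros i. rewrite den_Iter. reflexivity. Qed.
Lemma den_Cons a z env : den (ConsE a z) env = consN (den a env) (den z env).
Proof. unfold ConsE, consN. cbn [den]. rewrite den_Pair. reflexivity. Qed.

Lemma tlN_cons a l : tlN (encL (a :: l)) = encL l.
Proof. unfold tlN; simpl. apply cp_snd. Qed.
Lemma hdN_cons a l : hdN (encL (a :: l)) = a.
Proof. unfold hdN; simpl. apply cp_fst. Qed.
Lemma tlN_nil : tlN (encL []) = 0.
Proof. apply csnd0. Qed.
Lemma hdN_nil : hdN (encL []) = 0.
Proof. apply cfst0. Qed.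

Lemma iterN_encL i l : iterN i (encL l) = encL (skipn i l).
Proof.
  revert l; induction i; intros l; cbn [iterN]; auto.
  rewrite IHi. destruct (Nat.lt_ge_cases i (length l)).
  - assert (exists a r, skipn i l = a :: r /\ skipn (S i) l = r) as [a [r [E1 E2]]].
    { clear IHi. revert l H; induction i; intros l H; destruct l as [|x l]; simpl in *; try lia.
      - exists x, l; auto.
      - apply IHi. lia. }
    rewrite E1, E2. apply tlN_cons.
  - rewrite !skipn_all2 by lia. apply tlN_nil.
Qed.

Lemma nthN_encL i l : nthN i (encL l) = nth i l 0.
Proof.
  unfold nthN. rewrite iterN_encL. revert l; induction i; intros l; destruct l; simpl; auto;
  first [apply hdN_nil | apply (hdN_cons _ l)].
Qed.

Lemma encL_ge l : length l <= encL l.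
Proof. induction l; simpl; auto. unfold consN. pose proof (cp_ge_r a (encL l)). lia. Qed.

Lemma lenN_encL l : lenN (encL l) = length l.
Proof.
  unfold lenN. rewrite (cnt_min _ _ (length l)).
  - pose proof (encL_ge l); lia.
  - intros i. rewrite iterN_encL. destruct (Nat.lt_ge_cases i (length l)).
    + split; auto. intros _. destruct (skipn i l) eqn:E; simpl.
      * apply (f_equal (@length nat)) in E. rewrite length_skipn in E. simpl in E. lia.
      * unfold consN; lia.
    + rewrite skipn_all2 by lia. simpl. split; [congruence|lia].
Qed.

Lemma encL_surj z : exists l, encL l = z.
Proof.
  induction z as [z IH] using lt_wf_ind. destruct z as [|z].
  - exists []; auto.
  - destruct (IH (csnd z)) as [l Hl]. pose proof (csnd_le z); lia.
    exists (cfst z :: l). simpl. unfold consN. rewrite Hl, cp_surj. reflexivity.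
Qed.

Lemma consN_encL a l : consN a (encL l) = encL (a :: l).
Proof. reflexivity. Qed.

Definition ent c w y h := cp c (cp w (cp y h)).
Definition E1 z := FstE z.
Definition E2 z := FstE (SndE z).
Definition E3 z := FstE (SndE (SndE z)).
Definition E4 z := SndE (SndE (SndE z)).
Definition e1 z := cfst z.
Definition e2 z := cfst (csnd z).
Definition e3 z := cfst (csnd (csnd z)).
Definition e4 z := csnd (csnd (csnd z)).
Lemma den_E1 z env : den (E1 z) env = e1 (den z env).
Proof. unfold E1, e1. rewrite den_Fst. reflexivity. Qed.
Lemma den_E2 z env : den (E2 z) env = e2 (den z env).
Proof. unfold E2, e2. rewrite den_Fst, den_Snd. reflexivity. Qed.
Lemma den_E3 z env : den (E3 z) env = e3 (den z env).
Proof. unfold E3, e3. rewrite den_Fst, !den_Snd. reflexivity. Qed.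
Lemma den_E4 z env : den (E4 z) env = e4 (den z env).
Proof. unfold E4, e4. rewrite !den_Snd. reflexivity. Qed.
Lemma ent_e1 c w y h : e1 (ent c w y h) = c.
Proof. unfold e1, ent. apply cp_fst. Qed.
Lemma ent_e2 c w y h : e2 (ent c w y h) = w.
Proof. unfold e2, ent. rewrite cp_snd. apply cp_fst. Qed.
Lemma ent_e3 c w y h : e3 (ent c w y h) = y.
Proof. unfold e3, ent. rewrite !cp_snd. apply cp_fst. Qed.
Lemma ent_e4 c w y h : e4 (ent c w y h) = h.
Proof. unfold e4, ent. rewrite !cp_snd. reflexivity. Qed.
Lemma ent_surj z : ent (e1 z) (e2 z) (e3 z) (e4 z) = z.
Proof. unfold ent, e1, e2, e3, e4. rewrite !cp_surj. reflexivity. Qed.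

Global Opaque Add Pred Subt Mul Ifz Eqb Leb NotE AndE OrE Bex Ball Count Tri PairE CsE SndE FstE
  TlE HdE IterE NthE LenE ConsE E1 E2 E3 E4.

Open Scope nat_scope.

Fixpoint enc (c : code) : nat :=
  match c with
  | Zero => cp 0 0
  | Succ => cp 1 0
  | Proj i => cp 2 i
  | Comp f gs => cp 3 (cp (enc f) (encL (map enc gs)))
  | Prec f g => cp 4 (cp (enc f) (enc g))
  | Mu f => cp 5 (enc f)
  end.

Lemma enc_Zero : enc Zero = 0.
Proof. reflexivity. Qed.

Definition found (tau i c w y : nat) : Prop :=
  exists i', i' < i /\ e1 (nthN i' tau) = c /\ e2 (nthN i' tau) = w /\ e3 (nthN i' tau) = y.
Definition foundNZ (tau i c w : nat) : Prop :=
  exists i', i' < i /\ e1 (nthN i' tau) = c /\ e2 (nthN i' tau) = w /\ e3 (nthN i' tau) <> 0.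

Definition justG (F : nat -> nat -> nat -> Prop) (FNZ : nat -> nat -> Prop) (e : nat) : Prop :=
  let c := e1 e in let w := e2 e in let y := e3 e in let h := e4 e in
  let t := cfst c in let p := csnd c in
  (t = 0 /\ y = 0) \/
  (t = 1 /\ 1 <= lenN w /\ y = S (nthN 0 w)) \/
  (t = 2 /\ p < lenN w /\ y = nthN p w) \/
  (t = 3 /\ lenN h = lenN (csnd p) /\
     (forall idx, idx < lenN (csnd p) -> F (nthN idx (csnd p)) w (nthN idx h)) /\ F (cfst p) h y) \/
  (t = 4 /\ 1 <= lenN w /\
     ((nthN 0 w = 0 /\ F (cfst p) (tlN w) y) \/
      (nthN 0 w <> 0 /\ F c (consN (pred (nthN 0 w)) (tlN w)) h /\
       F (csnd p) (consN (pred (nthN 0 w)) (consN h (tlN w))) y))) \/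
  (t = 5 /\ F p (consN y w) 0 /\ forall l, l < y -> FNZ p (consN l w)).

Definition FoundE I T c w y :=
  Bex I (AndE (Eqb (E1 (NthE (V 0) (Sh T))) (Sh c))
         (AndE (Eqb (E2 (NthE (V 0) (Sh T))) (Sh w)) (Eqb (E3 (NthE (V 0) (Sh T))) (Sh y)))).
Lemma den_Found I T c w y env :
  den (FoundE I T c w y) env <> 0 <-> found (den T env) (den I env) (den c env) (den w env) (den y env).
Proof.
  unfold FoundE, found. rewrite den_Bex. split.
  - intros [i' [Hi H]]. rewrite !den_And, !den_Eqb_t, !den_E1, !den_E2, !den_E3, !den_Nth in H.
    cbn [den nth tl] in H. exists i'. tauto.
  - intros [i' [Hi H]]. exists i'. split; auto. rewrite !den_And, !den_Eqb_t, !den_E1, !den_E2, !den_E3, !den_Nth.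
    cbn [den nth tl]. tauto.
Qed.

Definition FoundNZE I T c w :=
  Bex I (AndE (Eqb (E1 (NthE (V 0) (Sh T))) (Sh c))
         (AndE (Eqb (E2 (NthE (V 0) (Sh T))) (Sh w)) (Leb (C 1) (E3 (NthE (V 0) (Sh T)))))).
Lemma den_FoundNZ I T c w env :
  den (FoundNZE I T c w) env <> 0 <-> foundNZ (den T env) (den I env) (den c env) (den w env).
Proof.
  unfold FoundNZE, foundNZ. rewrite den_Bex. split.
  - intros [i' [Hi H]]. rewrite !den_And, !den_Eqb_t, den_Leb_t, !den_E1, !den_E2, !den_E3, !den_Nth in H.
    cbn [den nth tl] in H. exists i'. split; auto. split; [tauto|]. split; [tauto|]. lia.
  - intros [i' [Hi H]]. exists i'. split; auto. rewrite !den_And, !den_Eqb_t, den_Leb_t, !den_E1, !den_E2, !den_E3, !den_Nth.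
    cbn [den nth tl]. split; [tauto|]. split; [tauto|]. lia.
Qed.

Section J.
(* environment: V 0 = i, V 1 = tau *)
Definition eE := NthE (V 0) (V 1).
Definition cE := E1 eE.
Definition wE := E2 eE.
Definition yE := E3 eE.
Definition hE := E4 eE.
Definition tE := FstE cE.
Definition pE := SndE cE.
Definition FE c w y := FoundE (V 0) (V 1) c w y.

Definition J0 := AndE (Eqb tE (C 0)) (Eqb yE (C 0)).
Definition J1 := AndE (Eqb tE (C 1)) (AndE (Leb (C 1) (LenE wE)) (Eqb yE (Sx (NthE (C 0) wE)))).
Definition J2 := AndE (Eqb tE (C 2)) (AndE (Leb (Sx pE) (LenE wE)) (Eqb yE (NthE pE wE))).
Definition J3 := AndE (Eqb tE (C 3)) (AndE (Eqb (LenE hE) (LenE (SndE pE)))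
   (AndE (Ball (LenE (SndE pE)) (FoundE (Sh (V 0)) (Sh (V 1)) (NthE (V 0) (Sh (SndE pE))) (Sh wE) (NthE (V 0) (Sh hE))))
         (FE (FstE pE) hE yE))).
Definition J4 := AndE (Eqb tE (C 4)) (AndE (Leb (C 1) (LenE wE))
   (OrE (AndE (Eqb (NthE (C 0) wE) (C 0)) (FE (FstE pE) (TlE wE) yE))
        (AndE (Leb (C 1) (NthE (C 0) wE)) (AndE (FE cE (ConsE (Pred (NthE (C 0) wE)) (TlE wE)) hE)
              (FE (SndE pE) (ConsE (Pred (NthE (C 0) wE)) (ConsE hE (TlE wE))) yE))))).
Definition J5 := AndE (Eqb tE (C 5)) (AndE (FE pE (ConsE yE wE) (C 0))
   (Ball yE (FoundNZE (Sh (V 0)) (Sh (V 1)) (Sh pE) (ConsE (V 0) (Sh wE))))).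
Definition JE := OrE J0 (OrE J1 (OrE J2 (OrE J3 (OrE J4 J5)))).
End J.

Ltac dsimp := repeat first [rewrite den_And | rewrite den_Or | rewrite den_Eqb_t | rewrite den_Leb_t
   | rewrite den_Found | rewrite den_FoundNZ | rewrite den_Ball
   | rewrite den_E1 | rewrite den_E2 | rewrite den_E3 | rewrite den_E4 | rewrite den_Nth | rewrite den_Len
   | rewrite den_Fst | rewrite den_Snd | rewrite den_Tl | rewrite den_Cons | rewrite den_Pred
   | progress cbn [den nth tl hd]]; unfold e1 in *.

Lemma den_JE i tau r : den JE (i :: tau :: r) <> 0 <-> justG (found tau i) (foundNZ tau i) (nthN i tau).
Proof.
  unfold JE, justG, J0, J1, J2, J3, J4, J5, FE, tE, pE, cE, wE, yE, hE, eE.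
  dsimp.
  split.
  - intros H. repeat match type of H with
      | _ \/ _ => destruct H as [H|H]
      end.
    all: try (left; tauto).
    + right; left; split; [tauto|]; split; [tauto|]; lia.
    + right; right; left; split; [tauto|]; split; [lia|]; tauto.
    + do 3 right; left. destruct H as [H1 [H2 [H3 H4]]]. split; auto. split; auto. split; auto.
      intros idx Hidx. specialize (H3 idx Hidx). revert H3; dsimp; auto.
    + do 4 right; left. destruct H as [H1 [H2 H3]]. split; auto. split; [lia|].
      destruct H3 as [H3|H3]; [left; tauto|right]. split; [lia|tauto].
    + do 5 right. destruct H as [H1 [H2 H3]]. split; auto. split; auto.
      intros l Hl. specialize (H3 l Hl). revert H3; dsimp; auto.
  - intros H. repeat match type of H with
      | _ \/ _ => destruct H as [H|H]
      end.
    + left; tauto.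
    + right; left; split; [tauto|]; split; [tauto|]; lia.
    + right; right; left; split; [tauto|]; split; [lia|]; tauto.
    + do 3 right; left. destruct H as [H1 [H2 [H3 H4]]]. split; auto. split; auto. split; auto.
      intros idx Hidx. revert Hidx; dsimp; auto.
    + do 4 right; left. destruct H as [H1 [H2 H3]]. split; auto. split; [lia|].
      destruct H3 as [H3|H3]; [left; tauto|right]. split; [lia|tauto].
    + do 5 right. destruct H as [H1 [H2 H3]]. split; auto. split; auto.
      intros l Hl. revert Hl; dsimp; auto.
Qed.

Definition ValidE := Ball (LenE (V 0)) JE.
Lemma den_Valid tau r : den ValidE (tau :: r) <> 0 <->
  forall i, i < lenN tau -> justG (found tau i) (foundNZ tau i) (nthN i tau).
Proof.
  unfold ValidE. rewrite den_Ball, den_Len. cbn [den nth]. split.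
  - intros H i Hi. apply den_JE with (r := r). apply H; auto.
  - intros H i Hi. apply den_JE. apply H; auto.
Qed.

Definition ContainsE := Bex (LenE (V 0)) (AndE (Eqb (E1 (NthE (V 0) (V 1))) (V 2))
    (AndE (Eqb (E2 (NthE (V 0) (V 1))) (ConsE (V 2) (C 0))) (Eqb (E3 (NthE (V 0) (V 1))) (C 0)))).
Lemma den_Contains tau k r : den ContainsE (tau :: k :: r) <> 0 <->
  exists i, i < lenN tau /\ e1 (nthN i tau) = k /\ e2 (nthN i tau) = encL [k] /\ e3 (nthN i tau) = 0.
Proof.
  unfold ContainsE. rewrite den_Bex, den_Len. cbn [den nth]. split.
  - intros [i [Hi H]]. exists i. split; auto. revert H. dsimp. intros H. unfold e1. simpl. tauto.
  - intros [i [Hi H]]. exists i. split; auto. dsimp. unfold e1 in H. simpl in H. tauto.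
Qed.

Definition TE := AndE ValidE ContainsE.
Definition Hk (k : nat) : Prop := exists tau, den TE [tau; k] <> 0.

Lemma nth_map_enc idx gs : nth idx (map enc gs) 0 = enc (nth idx gs Zero).
Proof. change 0 with (enc Zero). apply map_nth. Qed.

Lemma evals_of gs v ws : length ws = length gs ->
  (forall idx, idx < length gs -> eval (nth idx gs Zero) v (nth idx ws 0)) -> evals gs v ws.
Proof.
  revert ws; induction gs as [|g gs IH]; intros ws Hl H; destruct ws as [|w ws]; simpl in *; try lia.
  - constructor.
  - constructor. apply (H 0); lia. apply IH; [lia|]. intros idx Hi. apply (H (S idx)). lia.
Qed.

Lemma sound tau : (forall i, i < lenN tau -> justG (found tau i) (foundNZ tau i) (nthN i tau)) ->
  forall i, i < lenN tau -> forall c v y, e1 (nthN i tau) = enc c -> e2 (nthN i tau) = encL v ->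
  e3 (nthN i tau) = y -> eval c v y.
Proof.
  intros HV i. induction i as [i IH] using lt_wf_ind. intros Hi c v y Hc Hw Hy.
  assert (HF : forall c' v' y', found tau i (enc c') (encL v') y' -> eval c' v' y').
  { intros c' v' y' [i' [Hi' [A [B D]]]]. eapply IH; eauto. lia. }
  assert (HNZ : forall c' v', foundNZ tau i (enc c') (encL v') -> exists z, eval c' v' (S z)).
  { intros c' v' [i' [Hi' [A [B D]]]]. destruct (e3 (nthN i' tau)) as [|z] eqn:E; [congruence|].
    exists z. eapply IH; eauto. lia. }
  pose proof (HV i Hi) as HJ. unfold justG in HJ. rewrite Hc, Hw, Hy in HJ.
  destruct (encL_surj (e4 (nthN i tau))) as [ws Hws]. rewrite <- Hws in HJ.
  destruct c as [| |j|f gs|f g|f]; simpl enc in HJ; rewrite ?cp_fst, ?cp_snd in HJ;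
  (destruct HJ as [[Ht H]|[[Ht H]|[[Ht H]|[[Ht H]|[[Ht H]|[Ht H]]]]]]; try discriminate Ht).
  - rewrite H. constructor.
  - rewrite lenN_encL in H. destruct v as [|x v]; [simpl in H; lia|].
    destruct H as [_ H]. rewrite nthN_encL in H. simpl in H. rewrite H. constructor.
  - rewrite lenN_encL in H. destruct H as [H1 H2]. rewrite nthN_encL in H2. rewrite H2. constructor. auto.
  - rewrite !lenN_encL, length_map in H. destruct H as [H1 [H2 H3]].
    rewrite cp_fst in H3. apply eComp with (ws := ws); [|apply HF; exact H3].
    apply evals_of; auto. intros idx Hidx. apply HF.
    specialize (H2 idx Hidx). rewrite !nthN_encL, nth_map_enc in H2. exact H2.
  - rewrite lenN_encL in H. destruct H as [H1 H2]. destruct v as [|n v]; simpl in H1; [lia|].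
    rewrite nthN_encL, tlN_cons in H2. simpl in H2.
    destruct H2 as [[H2 H3]|[H2 [H3 H4]]].
    + subst n. constructor. apply HF. rewrite cp_fst in H3. exact H3.
    + destruct n as [|k]; [lia|]. simpl in H3, H4.
      rewrite consN_encL in H3. rewrite !consN_encL in H4.
      econstructor. apply HF. exact H3. apply HF. exact H4.
  - destruct H as [H1 H2]. constructor.
    + apply HF. exact H1.
    + intros l Hl. apply HNZ. apply H2. auto.
Qed.

Definition foundL (pre : list nat) c w y := exists x, In x pre /\ e1 x = c /\ e2 x = w /\ e3 x = y.
Definition foundNZL (pre : list nat) c w := exists x, In x pre /\ e1 x = c /\ e2 x = w /\ e3 x <> 0.
Definition validL (L : list nat) := forall i, i < length L ->
  justG (foundL (firstn i L)) (foundNZL (firstn i L)) (nth i L 0).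

Lemma justG_mono (F F' : nat -> nat -> nat -> Prop) (G G' : nat -> nat -> Prop) e :
  (forall c w y, F c w y -> F' c w y) -> (forall c w, G c w -> G' c w) -> justG F G e -> justG F' G' e.
Proof.
  intros HF HG. unfold justG.
  intros [H|[H|[H|[H|[H|H]]]]].
  - left; auto.
  - right; left; auto.
  - right; right; left; auto.
  - do 3 right; left. destruct H as [A [B [D E]]]. repeat split; auto.
  - do 4 right; left. destruct H as [A [B [[D E]|[D [E K]]]]]; split; auto; split; auto.
  - do 5 right. destruct H as [A [B D]]. repeat split; auto.
Qed.

Lemma foundL_mono pre pre' c w y : incl pre pre' -> foundL pre c w y -> foundL pre' c w y.
Proof. intros Hi [x [A B]]. exists x; split; auto. Qed.
Lemma foundNZL_mono pre pre' c w : incl pre pre' -> foundNZL pre c w -> foundNZL pre' c w.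
Proof. intros Hi [x [A B]]. exists x; split; auto. Qed.

Lemma validL_nil : validL [].
Proof. intros i Hi; simpl in Hi; lia. Qed.

Lemma validL_app L1 L2 : validL L1 -> validL L2 -> validL (L1 ++ L2).
Proof.
  intros H1 H2 i Hi. rewrite length_app in Hi. destruct (Nat.lt_ge_cases i (length L1)).
  - rewrite firstn_app, app_nth1 by auto. replace (i - length L1) with 0 by lia. simpl. rewrite app_nil_r. auto.
  - rewrite firstn_app, app_nth2 by auto. rewrite firstn_all2 by lia.
    eapply justG_mono; [| |apply H2; lia].
    + intros c w y. apply foundL_mono. intros x; rewrite in_app_iff; auto.
    + intros c w. apply foundNZL_mono. intros x; rewrite in_app_iff; auto.
Qed.

Lemma validL_snoc L e : validL L -> justG (foundL L) (foundNZL L) e -> validL (L ++ [e]).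
Proof.
  intros H1 H2 i Hi. rewrite length_app in Hi. simpl in Hi. destruct (Nat.lt_ge_cases i (length L)).
  - rewrite firstn_app, app_nth1 by auto. replace (i - length L) with 0 by lia. simpl. rewrite app_nil_r. auto.
  - assert (i = length L) by lia. subst i. rewrite firstn_app, app_nth2 by auto. rewrite firstn_all2 by lia.
    rewrite Nat.sub_diag. simpl. rewrite app_nil_r. auto.
Qed.

Definition inL L c v y := exists h, In (ent (enc c) (encL v) y h) L.

Lemma foundL_of L c v y : inL L c v y -> foundL L (enc c) (encL v) y.
Proof. intros [h Hh]. eexists; split; [exact Hh|]. rewrite ent_e1, ent_e2, ent_e3. auto. Qed.

Lemma inL_app_l L1 L2 c v y : inL L1 c v y -> inL (L1 ++ L2) c v y.
Proof. intros [h Hh]; exists h; apply in_or_app; auto. Qed.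
Lemma inL_app_r L1 L2 c v y : inL L2 c v y -> inL (L1 ++ L2) c v y.
Proof. intros [h Hh]; exists h; apply in_or_app; auto. Qed.

Lemma justG_ent F G c w y h : justG F G (ent c w y h) <->
  let t := cfst c in let p := csnd c in
  (t = 0 /\ y = 0) \/
  (t = 1 /\ 1 <= lenN w /\ y = S (nthN 0 w)) \/
  (t = 2 /\ p < lenN w /\ y = nthN p w) \/
  (t = 3 /\ lenN h = lenN (csnd p) /\
     (forall idx, idx < lenN (csnd p) -> F (nthN idx (csnd p)) w (nthN idx h)) /\ F (cfst p) h y) \/
  (t = 4 /\ 1 <= lenN w /\
     ((nthN 0 w = 0 /\ F (cfst p) (tlN w) y) \/
      (nthN 0 w <> 0 /\ F c (consN (pred (nthN 0 w)) (tlN w)) h /\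
       F (csnd p) (consN (pred (nthN 0 w)) (consN h (tlN w))) y))) \/
  (t = 5 /\ F p (consN y w) 0 /\ forall l, l < y -> G p (consN l w)).
Proof. unfold justG. rewrite ent_e1, ent_e2, ent_e3, ent_e4. reflexivity. Qed.

Lemma evals_len gs v ws : evals gs v ws -> length ws = length gs.
Proof. induction 1; simpl; auto. Qed.

Lemma complete : forall c v y, eval c v y -> exists L, validL L /\ inL L c v y.
Proof.
  induction c as [| |j|f gs IHf IHgs|f g IHf IHg|f IHf] using code_ind'; intros v y Hev.
  - inversion Hev; subst. exists ([] ++ [ent (enc Zero) (encL v) 0 0]). split.
    + apply validL_snoc. apply validL_nil. apply justG_ent. cbv zeta. simpl enc. rewrite cp_fst. left; auto.
    + exists 0. simpl; auto.
  - inversion Hev; subst. exists ([] ++ [ent (enc Succ) (encL (x :: v0)) (S x) 0]). split.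
    + apply validL_snoc. apply validL_nil. apply justG_ent. cbv zeta. simpl enc. rewrite cp_fst.
      right; left. rewrite lenN_encL, nthN_encL. simpl. split; auto. split; auto. lia.
    + exists 0. simpl; auto.
  - inversion Hev; subst. exists ([] ++ [ent (enc (Proj j)) (encL v) (nth j v 0) 0]). split.
    + apply validL_snoc. apply validL_nil. apply justG_ent. cbv zeta. simpl enc. rewrite cp_fst, cp_snd.
      right; right; left. rewrite lenN_encL, nthN_encL. auto.
    + exists 0. simpl; auto.
  - inversion Hev; subst. match goal with H : evals _ _ _ |- _ => rename H into Hes end.
    match goal with H : eval f _ _ |- _ => rename H into Hf end.
    assert (exists L, validL L /\ forall idx, idx < length gs -> inL L (nth idx gs Zero) v (nth idx ws 0))
      as [L1 [HL1 HL1']].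
    { clear Hf IHf Hev. revert ws Hes. induction IHgs as [|g gs' Hg Hgs IH]; intros ws Hes.
      - exists []. split. apply validL_nil. simpl; intros; lia.
      - inversion Hes as [|g0 gs0 v0 y0 ys0 Hg0 Hgs0]; subst. destruct (Hg _ _ Hg0) as [La [Ha Ha']]. destruct (IH _ Hgs0) as [Lb [Hb Hb']].
        exists (La ++ Lb). split. apply validL_app; auto.
        intros [|idx] Hidx; simpl. apply inL_app_l; auto. apply inL_app_r. apply Hb'. simpl in Hidx; lia. }
    destruct (IHf _ _ Hf) as [L2 [HL2 HL2']].
    pose proof (evals_len _ _ _ Hes) as Hlen.
    exists ((L1 ++ L2) ++ [ent (enc (Comp f gs)) (encL v) y (encL ws)]). split.
    + apply validL_snoc. apply validL_app; auto. apply justG_ent. cbv zeta. simpl enc. repeat rewrite ?cp_fst, ?cp_snd.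
      do 3 right; left. rewrite !lenN_encL, length_map. split; auto. split; auto. split.
      * intros idx Hidx. rewrite !nthN_encL, nth_map_enc. eapply foundL_mono; [|apply foundL_of, HL1'; auto].
        intros x; rewrite in_app_iff; auto.
      * eapply foundL_mono; [|apply foundL_of, HL2'; auto]. intros x; rewrite in_app_iff; auto.
    + apply inL_app_r. exists (encL ws). simpl; auto.
  - destruct v as [|n v]; [inversion Hev|]. revert y Hev. induction n as [|n IHn]; intros y Hev.
    + inversion Hev; subst. match goal with H : eval f _ _ |- _ => destruct (IHf _ _ H) as [L1 [HL1 HL1']] end.
      exists (L1 ++ [ent (enc (Prec f g)) (encL (0 :: v)) y 0]). split.
      * apply validL_snoc; auto. apply justG_ent. cbv zeta. simpl enc. repeat rewrite ?cp_fst, ?cp_snd.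
        do 4 right; left. rewrite lenN_encL, nthN_encL, tlN_cons. simpl. split; auto. split; [lia|].
        left. split; auto. apply foundL_of; auto.
      * apply inL_app_r. exists 0. simpl; auto.
    + inversion Hev; subst.
      match goal with H : eval (Prec f g) _ _ |- _ => destruct (IHn _ H) as [L1 [HL1 HL1']] end.
      match goal with H : eval g _ _ |- _ => destruct (IHg _ _ H) as [L2 [HL2 HL2']] end.
      exists ((L1 ++ L2) ++ [ent (enc (Prec f g)) (encL (S n :: v)) y r]). split.
      * apply validL_snoc. apply validL_app; auto. apply justG_ent. cbv zeta. simpl enc. repeat rewrite ?cp_fst, ?cp_snd.
        do 4 right; left. rewrite lenN_encL, nthN_encL, tlN_cons. simpl. split; auto. split; [lia|].
        right. split; [lia|]. split.
        -- rewrite consN_encL. eapply foundL_mono; [|apply (foundL_of _ (Prec f g)), HL1'].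
           intros x; rewrite in_app_iff; auto.
        -- rewrite !consN_encL. eapply foundL_mono; [|apply foundL_of, HL2']. intros x; rewrite in_app_iff; auto.
      * apply inL_app_r. exists r. simpl; auto.
  - inversion Hev; subst.
    match goal with H : eval f _ 0 |- _ => rename H into H0' end.
    match goal with H : forall l, _ -> exists z, _ |- _ => rename H into Hlt end.
    destruct (IHf _ _ H0') as [L1 [HL1 HL1']].
    assert (forall k', k' <= y -> exists L, validL L /\ forall l, l < k' -> exists z, inL L f (l :: v) (S z))
      as Hall.
    { induction k' as [|k' IHk]; intros Hk.
      - exists []. split. apply validL_nil. intros; lia.
      - destruct IHk as [La [Ha Ha']]. lia. destruct (Hlt k') as [z Hz]. lia.
        destruct (IHf _ _ Hz) as [Lb [Hb Hb']]. exists (La ++ Lb). split. apply validL_app; auto.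
        intros l Hl. destruct (Nat.eq_dec l k'). subst. exists z. apply inL_app_r; auto.
        destruct (Ha' l) as [z' Hz']. lia. exists z'. apply inL_app_l; auto. }
    destruct (Hall y (le_n _)) as [L2 [HL2 HL2']].
    exists ((L1 ++ L2) ++ [ent (enc (Mu f)) (encL v) y 0]). split.
    + apply validL_snoc. apply validL_app; auto. apply justG_ent. cbv zeta. simpl enc. repeat rewrite ?cp_fst, ?cp_snd.
      do 5 right. split; auto. split.
      * rewrite consN_encL. eapply foundL_mono; [|apply foundL_of, HL1']. intros x; rewrite in_app_iff; auto.
      * intros l Hl. destruct (HL2' l Hl) as [z [h Hh]]. exists (ent (enc f) (encL (l :: v)) (S z) h).
        rewrite ent_e1, ent_e2, ent_e3. split. apply in_or_app; right; auto. repeat split; auto.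
    + apply inL_app_r. exists 0. simpl; auto.
Qed.

Lemma validL_valid L : validL L -> forall i, i < lenN (encL L) ->
  justG (found (encL L) i) (foundNZ (encL L) i) (nthN i (encL L)).
Proof.
  intros HV i Hi. rewrite lenN_encL in Hi. rewrite nthN_encL.
  eapply justG_mono; [| |apply HV; auto].
  - intros c w y [x [Hx [A [B D]]]]. apply In_nth with (d := 0) in Hx. destruct Hx as [i' [Hi' Hx]].
    rewrite length_firstn in Hi'. exists i'. split; [lia|]. rewrite nthN_encL.
    rewrite nth_firstn in Hx. destruct (i' <? i) eqn:E; [|apply Nat.ltb_ge in E; lia].
    subst x. auto.
  - intros c w [x [Hx [A [B D]]]]. apply In_nth with (d := 0) in Hx. destruct Hx as [i' [Hi' Hx]].
    rewrite length_firstn in Hi'. exists i'. split; [lia|]. rewrite nthN_encL.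
    rewrite nth_firstn in Hx. destruct (i' <? i) eqn:E; [|apply Nat.ltb_ge in E; lia].
    subst x. auto.
Qed.

Lemma den_TE tau k r : den TE (tau :: k :: r) <> 0 <->
  (forall i, i < lenN tau -> justG (found tau i) (foundNZ tau i) (nthN i tau)) /\
  exists i, i < lenN tau /\ e1 (nthN i tau) = k /\ e2 (nthN i tau) = encL [k] /\ e3 (nthN i tau) = 0.
Proof. unfold TE. rewrite den_And, den_Valid, den_Contains. reflexivity. Qed.

Lemma den_TE_indep tau k r r' : den TE (tau :: k :: r) <> 0 <-> den TE (tau :: k :: r') <> 0.
Proof. rewrite !den_TE. reflexivity. Qed.

Theorem undecidable : ~ exists delta, recursive 1 delta /\ forall k, Hk k <-> delta [k] <> 0.
Proof.
  intros [delta [[c Hc] HH]]. set (e := enc c).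
  assert (He : eval c [e] (delta [e])) by (apply Hc; reflexivity).
  destruct (Nat.eq_dec (delta [e]) 0) as [E|E].
  - rewrite E in He. destruct (complete _ _ _ He) as [L [HL [h Hh]]].
    apply (HH e). 2: exact E. exists (encL L). apply (den_TE _ _ []). split.
    + apply validL_valid; auto.
    + apply In_nth with (d := 0) in Hh. destruct Hh as [i [Hi Hx]]. exists i.
      rewrite lenN_encL, nthN_encL, Hx, ent_e1, ent_e2, ent_e3. auto.
  - apply HH in E as HE. destruct HE as [tau Htau]. apply (den_TE _ _ []) in Htau. destruct Htau as [HV [i [Hi [A [B D]]]]].
    assert (eval c [e] 0) by (eapply sound; eauto).
    apply E. symmetry. eapply eval_det; eauto.
Qed.

Open Scope R_scope.

Lemma fold_plus_init c l : fold_right Rplus c l = fold_right Rplus 0 l + c.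
Proof. induction l; simpl; [lra|]. rewrite IHl. lra. Qed.

Lemma fsum_0 f : fsum 0 f = 0.
Proof. reflexivity. Qed.

Lemma fsum_S n f : fsum (S n) f = fsum n f + f n.
Proof.
  unfold fsum. rewrite seq_S, map_app, fold_right_app. simpl. rewrite fold_plus_init. lra.
Qed.

Lemma fsum_ext n f g : (forall j, (j < n)%nat -> f j = g j) -> fsum n f = fsum n g.
Proof. induction n; intros H; [reflexivity|]. rewrite !fsum_S. rewrite IHn, H; auto. Qed.

Lemma fsum_zero n f : (forall j, (j < n)%nat -> f j = 0) -> fsum n f = 0.
Proof. induction n; intros H; [reflexivity|]. rewrite fsum_S, IHn, H; auto; lra. Qed.

Lemma fsum_nonneg n f : (forall j, (j < n)%nat -> 0 <= f j) -> 0 <= fsum n f.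
Proof. induction n; intros H. rewrite fsum_0; lra. rewrite fsum_S. pose proof (H n (Nat.lt_succ_diag_r n)). pose proof (IHn (fun j Hj => H j (Nat.lt_lt_succ_r _ _ Hj))). lra. Qed.

Lemma fsum_ge_term n f j : (forall j, (j < n)%nat -> 0 <= f j) -> (j < n)%nat -> f j <= fsum n f.
Proof.
  induction n; intros H Hj; [lia|]. rewrite fsum_S.
  assert (0 <= fsum n f) by (apply fsum_nonneg; auto).
  destruct (Nat.eq_dec j n). subst; lra.
  pose proof (IHn (fun j Hj => H j (Nat.lt_lt_succ_r _ _ Hj)) ltac:(lia)). pose proof (H n ltac:(lia)). lra.
Qed.

Lemma fsum_le0_terms n f : (forall j, (j < n)%nat -> 0 <= f j) -> fsum n f <= 0 ->
  forall j, (j < n)%nat -> f j = 0.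
Proof. intros H Hs j Hj. pose proof (fsum_ge_term n f j H Hj). pose proof (H j Hj). lra. Qed.

Lemma fsum_two n f : (2 <= n)%nat -> (forall j, (2 <= j < n)%nat -> f j = 0) -> fsum n f = f 0%nat + f 1%nat.
Proof.
  intros Hn H. induction n as [|n IH]; [lia|].
  destruct (Nat.eq_dec n 1).
  - subst. rewrite !fsum_S, fsum_0. lra.
  - rewrite fsum_S, IH by (try lia; intros; apply H; lia). rewrite (H n) by lia. lra.
Qed.

Definition Pfun (i : nat) : R := if (i <? 2)%nat then / 2 else 0.
Definition dfun (x : R) (i j : nat) : R :=
  if (i =? 0)%nat then (if (j =? 0)%nat then 0 else if (j =? 1)%nat then x else 1)
  else if (i =? 1)%nat then (if (j =? 1)%nat then 0 else 1) else 0.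

Lemma Pfun_distr m : (2 <= m)%nat -> is_distr m Pfun.
Proof.
  intros Hm. split.
  - intros i _. unfold Pfun. destruct (i <? 2)%nat; lra.
  - rewrite fsum_two; auto. unfold Pfun; simpl; lra.
    intros j Hj. unfold Pfun. replace (j <? 2)%nat with false; auto. symmetry; apply Nat.ltb_ge; lia.
Qed.

Lemma dfun_nonneg x i j : 0 <= x -> 0 <= dfun x i j.
Proof. intros Hx. unfold dfun. destruct (i =? 0)%nat, (j =? 0)%nat, (j =? 1)%nat, (i =? 1)%nat; lra. Qed.

Record feas_info (n : nat) (x : R) (W : nat -> nat -> R) : Prop := {
  fi_00 : 0 <= W 0%nat 0%nat;
  fi_le1 : W 0%nat 0%nat <= 1;
  fi_01 : W 0%nat 1%nat = 1 - W 0%nat 0%nat;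
  fi_0j : forall j, (2 <= j < n)%nat -> W 0%nat j = 0;
  fi_10 : W 1%nat 0%nat = 0;
  fi_11 : W 1%nat 1%nat = 1;
  fi_1j : forall j, (2 <= j < n)%nat -> W 1%nat j = 0;
  fi_x : x * W 0%nat 1%nat = 0 }.

Lemma feas_char m n x W : (2 <= m)%nat -> (2 <= n)%nat -> 0 <= x ->
  feasible m n (dfun x) 0 Pfun W -> feas_info n x W.
Proof.
  intros Hm Hn Hx [HW Hd]. unfold avg_distortion in Hd.
  assert (Hnn : forall i j, (i < m)%nat -> (j < n)%nat -> 0 <= Pfun i * W i j * dfun x i j).
  { intros i j Hi Hj. apply Rmult_le_pos; [apply Rmult_le_pos|apply dfun_nonneg; auto].
    unfold Pfun; destruct (i <? 2)%nat; lra. apply (proj1 (HW i Hi)); auto. }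
  assert (Hrow : forall i, (i < m)%nat -> fsum n (fun j => Pfun i * W i j * dfun x i j) = 0).
  { apply fsum_le0_terms; auto. intros i Hi. apply fsum_nonneg. intros; apply Hnn; auto. }
  assert (Hterm : forall i j, (i < m)%nat -> (j < n)%nat -> Pfun i * W i j * dfun x i j = 0).
  { intros i j Hi Hj. apply (fsum_le0_terms n (fun j => Pfun i * W i j * dfun x i j));
    [intros j' Hj'; apply Hnn; auto | rewrite Hrow; auto; lra | exact Hj]. }
  destruct (HW 0%nat ltac:(lia)) as [H0n H0s]. destruct (HW 1%nat ltac:(lia)) as [H1n H1s].
  assert (H0j : forall j, (2 <= j < n)%nat -> W 0%nat j = 0).
  { intros j Hj. pose proof (Hterm 0%nat j ltac:(lia) ltac:(lia)) as T. unfold Pfun, dfun in T. simpl in T.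
    destruct (j =? 0)%nat eqn:E1; [apply Nat.eqb_eq in E1; lia|]. destruct (j =? 1)%nat eqn:E2; [apply Nat.eqb_eq in E2; lia|].
    lra. }
  assert (H1j : forall j, (2 <= j < n)%nat -> W 1%nat j = 0).
  { intros j Hj. pose proof (Hterm 1%nat j ltac:(lia) ltac:(lia)) as T. unfold Pfun, dfun in T. simpl in T.
    destruct (j =? 1)%nat eqn:E2; [apply Nat.eqb_eq in E2; lia|]. lra. }
  assert (H10 : W 1%nat 0%nat = 0).
  { pose proof (Hterm 1%nat 0%nat ltac:(lia) ltac:(lia)) as T. unfold Pfun, dfun in T. simpl in T. lra. }
  rewrite fsum_two in H0s, H1s; auto.
  assert (0 <= W 0%nat 0%nat) by (apply H0n; lia).
  assert (0 <= W 0%nat 1%nat) by (apply H0n; lia).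
  constructor; auto.
  - lra.
  - lra.
  - lra.
  - pose proof (Hterm 0%nat 1%nat ltac:(lia) ltac:(lia)) as T. unfold Pfun, dfun in T. simpl in T. lra.
Qed.

Definition Wa (a : R) (i j : nat) : R :=
  if (i =? 1)%nat then (if (j =? 1)%nat then 1 else 0)
  else (if (j =? 0)%nat then a else if (j =? 1)%nat then 1 - a else 0).

Lemma Wa_feas m n x a : (2 <= m)%nat -> (2 <= n)%nat -> 0 <= a <= 1 -> x * (1 - a) = 0 ->
  feasible m n (dfun x) 0 Pfun (Wa a).
Proof.
  intros Hm Hn Ha Hx. split.
  - intros i Hi. split.
    + intros j Hj. unfold Wa. destruct (i =? 1)%nat, (j =? 1)%nat, (j =? 0)%nat; lra.
    + rewrite fsum_two; auto. unfold Wa. destruct (i =? 1)%nat; simpl; lra.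
      intros j Hj. unfold Wa. destruct (j =? 1)%nat eqn:E1; [apply Nat.eqb_eq in E1; lia|].
      destruct (j =? 0)%nat eqn:E0; [apply Nat.eqb_eq in E0; lia|]. destruct (i =? 1)%nat; auto.
  - unfold avg_distortion. rewrite fsum_zero; [lra|]. intros i Hi. apply fsum_zero. intros j Hj.
    unfold Pfun, dfun, Wa.
    destruct (i <? 2)%nat eqn:Ei; [|lra]. apply Nat.ltb_lt in Ei.
    destruct i as [|[|i]]; [| |lia]; simpl.
    + destruct j as [|[|j]]; simpl; lra.
    + destruct j as [|[|j]]; simpl; lra.
Qed.

Lemma Wa_info n x a : 0 <= a <= 1 -> x * (1 - a) = 0 -> feas_info n x (Wa a).
Proof. intros Ha Hx. constructor; unfold Wa; simpl; auto; try lra.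
  - intros j Hj. destruct j as [|[|j]]; simpl; auto; lia.
  - intros j Hj. destruct j as [|[|j]]; simpl; auto; lia.
Qed.

Lemma Pfun0 : Pfun 0%nat = / 2.
Proof. reflexivity. Qed.
Lemma Pfun1 : Pfun 1%nat = / 2.
Proof. reflexivity. Qed.

Definition tm (p r : R) : R := if Req_EM_T p 0 then 0 else p * ln r.
Lemma tm_fold p r : (if Req_EM_T p 0 then 0 else p * ln r) = tm p r.
Proof. reflexivity. Qed.
Lemma tm_0 r : tm 0 r = 0.
Proof. unfold tm. destruct (Req_EM_T 0 0); auto. lra. Qed.
Lemma tm_pos p r : p <> 0 -> tm p r = p * ln r.
Proof. unfold tm. destruct (Req_EM_T p 0); auto. lra. Qed.

Definition gI (a : R) : R :=
  (if Req_EM_T a 0 then 0 else a / 2 * ln 2) +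
  (if Req_EM_T a 1 then 0 else (1 - a) / 2 * ln (2 * (1 - a) / (2 - a))) +
  / 2 * ln (2 / (2 - a)).

Lemma mi_formula m n x W : (2 <= m)%nat -> (2 <= n)%nat -> feas_info n x W ->
  mutinf m n Pfun W = gI (W 0%nat 0%nat).
Proof.
  intros Hm Hn [H00 Hle H01 H0j H10 H11 H1j Hx].
  assert (Hout : forall j, out_distr m Pfun W j = / 2 * W 0%nat j + / 2 * W 1%nat j).
  { intros j. unfold out_distr.
    rewrite fsum_two by (auto; intros i Hi; unfold Pfun;
      replace (i <? 2)%nat with false by (symmetry; apply Nat.ltb_ge; lia); lra).
    unfold Pfun; simpl; lra. }
  unfold mutinf.
  rewrite fsum_two by (auto; intros i Hi; apply fsum_zero; intros j Hj; unfold Pfun;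
      replace (i <? 2)%nat with false by (symmetry; apply Nat.ltb_ge; lia);
      cbv zeta; rewrite Rmult_0_l; destruct (Req_EM_T 0 0); auto; lra).
  rewrite (fsum_two n) by (auto; intros j Hj; cbv zeta; unfold Pfun; simpl; rewrite (H0j j Hj);
       rewrite Rmult_0_r; destruct (Req_EM_T 0 0); auto; lra).
  rewrite (fsum_two n) by (auto; intros j Hj; cbv zeta; unfold Pfun; simpl; rewrite (H1j j Hj);
       rewrite Rmult_0_r; destruct (Req_EM_T 0 0); auto; lra).
  cbv zeta. rewrite !Hout, !Pfun0, !Pfun1.
  rewrite !tm_fold.
  rewrite H01, H10, H11. set (a := W 0%nat 0%nat) in *.
  rewrite Rmult_0_r, tm_0.
  unfold gI.
  assert (E1 : tm (/ 2 * a) (a / (/ 2 * a + 0)) = (if Req_EM_T a 0 then 0 else a / 2 * ln 2)).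
  { destruct (Req_EM_T a 0) as [Ea|Ea].
    - rewrite Ea, Rmult_0_r. apply tm_0.
    - rewrite tm_pos by lra. replace (a / (/ 2 * a + 0)) with 2 by (field; auto). lra. }
  assert (E2 : tm (/ 2 * (1 - a)) ((1 - a) / (/ 2 * (1 - a) + / 2 * 1)) =
     (if Req_EM_T a 1 then 0 else (1 - a) / 2 * ln (2 * (1 - a) / (2 - a)))).
  { destruct (Req_EM_T a 1) as [Ea|Ea].
    - rewrite Ea. replace (/ 2 * (1 - 1)) with 0 by ring. apply tm_0.
    - rewrite tm_pos by lra. replace ((1 - a) / (/ 2 * (1 - a) + / 2 * 1)) with (2 * (1 - a) / (2 - a)) by (field; lra). lra. }
  assert (E3 : tm (/ 2 * 1) (1 / (/ 2 * (1 - a) + / 2 * 1)) = / 2 * ln (2 / (2 - a))).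
  { rewrite tm_pos by lra. replace (1 / (/ 2 * (1 - a) + / 2 * 1)) with (2 / (2 - a)) by (field; lra). lra. }
  rewrite E1, E2, E3. lra.
Qed.

Lemma ln_ge y : 0 < y -> 1 - / y <= ln y.
Proof.
  intros Hy. pose proof (exp_ineq1_le (ln (/ y))) as H. rewrite exp_ln in H by (apply Rinv_0_lt_compat; auto).
  rewrite ln_Rinv in H by auto. lra.
Qed.

Lemma ln2_pos : 0 < ln 2.
Proof. pose proof ln_lt_2. lra. Qed.

Lemma gI_0 : gI 0 = 0.
Proof.
  unfold gI. destruct (Req_EM_T 0 0); [|lra]. destruct (Req_EM_T 0 1); [lra|].
  replace (2 * (1 - 0) / (2 - 0)) with 1 by field. replace (2 / (2 - 0)) with 1 by field. rewrite ln_1. lra.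
Qed.

Lemma gI_1 : gI 1 = ln 2.
Proof.
  unfold gI. destruct (Req_EM_T 1 0); [lra|]. destruct (Req_EM_T 1 1); [|lra].
  replace (2 / (2 - 1)) with 2 by field. lra.
Qed.

Lemma gI_nonneg a : 0 <= a <= 1 -> 0 <= gI a.
Proof.
  intros Ha. unfold gI. pose proof ln2_pos.
  assert (T1 : 0 <= (if Req_EM_T a 0 then 0 else a / 2 * ln 2)).
  { destruct (Req_EM_T a 0); [lra|]. apply Rmult_le_pos; lra. }
  assert (T2 : - (a / 4) <= (if Req_EM_T a 1 then 0 else (1 - a) / 2 * ln (2 * (1 - a) / (2 - a)))).
  { destruct (Req_EM_T a 1); [lra|].
    assert (0 < 2 * (1 - a) / (2 - a)) by (apply Rdiv_lt_0_compat; lra).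
    pose proof (ln_ge _ H0).
    assert ((1 - a) / 2 * (1 - / (2 * (1 - a) / (2 - a))) = - (a / 4)) by (field; lra).
    assert ((1 - a) / 2 * (1 - / (2 * (1 - a) / (2 - a))) <= (1 - a) / 2 * ln (2 * (1 - a) / (2 - a))).
    { apply Rmult_le_compat_l; lra. }
    lra. }
  assert (T3 : a / 4 <= / 2 * ln (2 / (2 - a))).
  { assert (0 < 2 / (2 - a)) by (apply Rdiv_lt_0_compat; lra).
    pose proof (ln_ge _ H0).
    assert (/ 2 * (1 - / (2 / (2 - a))) = a / 4) by (field; lra). nra. }
  lra.
Qed.

Lemma mutinf_Wa m n x a : (2 <= m)%nat -> (2 <= n)%nat -> 0 <= a <= 1 -> x * (1 - a) = 0 ->
  mutinf m n Pfun (Wa a) = gI a.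
Proof.
  intros. rewrite (mi_formula m n x); auto. apply Wa_info; auto.
Qed.

Lemma opt_pos m n x : (2 <= m)%nat -> (2 <= n)%nat -> 0 < x -> P_opt m n (dfun x) 0 Pfun (Wa 1).
Proof.
  intros Hm Hn Hx. split.
  - apply Wa_feas; auto; lra.
  - intros W' HW'. pose proof (feas_char m n x W' Hm Hn ltac:(lra) HW') as FI.
    assert (W' 0%nat 0%nat = 1).
    { destruct FI. assert (W' 0%nat 1%nat = 0). { apply Rmult_integral in fi_x0. destruct fi_x0; lra. } lra. }
    rewrite (mi_formula m n x W'); auto. rewrite (mutinf_Wa m n x 1); auto; try lra. rewrite H. lra.
Qed.

Lemma opt_zero m n : (2 <= m)%nat -> (2 <= n)%nat -> P_opt m n (dfun 0) 0 Pfun (Wa 0).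
Proof.
  intros Hm Hn. split.
  - apply Wa_feas; auto; lra.
  - intros W' HW'. pose proof (feas_char m n 0 W' Hm Hn ltac:(lra) HW') as FI.
    rewrite (mi_formula m n 0 W'); auto. rewrite (mutinf_Wa m n 0 0); auto; try lra.
    rewrite gI_0. apply gI_nonneg. destruct FI; lra.
Qed.

Lemma out_pos m n x W : (2 <= m)%nat -> (2 <= n)%nat -> 0 < x -> P_opt m n (dfun x) 0 Pfun W ->
  W 0%nat 0%nat = 1.
Proof.
  intros Hm Hn Hx [HF _]. pose proof (feas_char m n x W Hm Hn ltac:(lra) HF) as FI. destruct FI.
  assert (W 0%nat 1%nat = 0). { apply Rmult_integral in fi_x0. destruct fi_x0; lra. } lra.
Qed.

Lemma out_zero m n W : (2 <= m)%nat -> (2 <= n)%nat -> P_opt m n (dfun 0) 0 Pfun W ->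
  0 <= W 0%nat 0%nat < 1.
Proof.
  intros Hm Hn [HF Hopt]. pose proof (feas_char m n 0 W Hm Hn ltac:(lra) HF) as FI.
  pose proof (Hopt (Wa 0) (Wa_feas m n 0 0 Hm Hn ltac:(lra) ltac:(lra))) as H.
  rewrite (mi_formula m n 0 W) in H; auto. rewrite (mutinf_Wa m n 0 0) in H; auto; try lra.
  rewrite gI_0 in H. destruct FI. split; auto.
  destruct (Req_EM_T (W 0%nat 0%nat) 1) as [E|E].
  - rewrite E, gI_1 in H. pose proof ln2_pos. lra.
  - lra.
Qed.

Open Scope nat_scope.
Definition Pow2 n := Rec n (C 1) (Add (V 1) (V 1)).
Lemma den_Pow2 n env : den (Pow2 n) env = 2 ^ den n env.
Proof. unfold Pow2. cbn [den]. induction (den n env); cbn [nat_rect]; auto. rewrite den_Add. cbn [den nth]. rewrite IHn0. simpl. lia. Qed.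

Definition Par x := Rec x (C 0) (Subt (C 1) (V 1)).
Lemma den_Par x env : den (Par x) env = if Nat.even (den x env) then 0 else 1.
Proof.
  unfold Par. cbn [den]. induction (den x env) as [|k IH]; cbn [nat_rect]; auto.
  rewrite den_Subt. cbn [den nth]. rewrite IH. rewrite Nat.even_succ, <- Nat.negb_even.
  destruct (Nat.even k); reflexivity.
Qed.

Definition Tf (k t : nat) : nat := den TE [t; k].
Lemma Tf_indep k t r : den TE (t :: k :: r) <> 0 <-> Tf k t <> 0.
Proof. unfold Tf. apply den_TE_indep. Qed.

Lemma Hk_Tf k : Hk k <-> exists t, Tf k t <> 0.
Proof. reflexivity. Qed.
Global Opaque Tf TE.

Lemma least_ex (P : nat -> Prop) : (forall t, P t \/ ~ P t) -> (exists t, P t) ->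
  exists t, P t /\ forall t', t' < t -> ~ P t'.
Proof.
  intros Hd [t Ht]. induction t as [t IH] using lt_wf_ind.
  destruct (classic (exists t', t' < t /\ P t')) as [[t' [Hlt Ht']]|Hno].
  - apply (IH t' Hlt Ht').
  - exists t. split; auto. intros t' Hlt Ht'. apply Hno; eauto.
Qed.

Definition least_sig (k : nat) (H : exists t, Tf k t <> 0%nat) :
  {t | Tf k t <> 0 /\ forall t', t' < t -> Tf k t' = 0}.
Proof.
  apply constructive_indefinite_description.
  destruct (least_ex (fun t => Tf k t <> 0%nat)) as [t [H1 H2]]; auto.
  - intros t. destruct (Nat.eq_dec (Tf k t) 0%nat); auto.
  - exists t. split; auto. intros t' Ht'. specialize (H2 t' Ht'). destruct (Nat.eq_dec (Tf k t') 0%nat); tauto.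
Defined.

Open Scope R_scope.
Definition xk (k : nat) : R :=
  match excluded_middle_informative (exists t, Tf k t <> 0%nat) with
  | left H => (/ 2) ^ (proj1_sig (least_sig k H))
  | right _ => 0
  end.

Lemma xk_none k : ~ (exists t, Tf k t <> 0%nat) -> xk k = 0.
Proof. intros H. unfold xk. destruct (excluded_middle_informative _); tauto. Qed.

Lemma xk_some k t0 : Tf k t0 <> 0%nat -> (forall t', (t' < t0)%nat -> Tf k t' = 0%nat) -> xk k = (/ 2) ^ t0.
Proof.
  intros H1 H2. unfold xk. destruct (excluded_middle_informative _) as [H|H].
  - destruct (least_sig k H) as [t [A B]]. simpl. f_equal.
    destruct (Nat.lt_trichotomy t t0) as [L|[E|L]]; auto.
    + exfalso; apply A; auto.
    + exfalso; apply H1; auto.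
  - exfalso; apply H; eauto.
Qed.

Lemma pow_half_pos t : 0 < (/ 2) ^ t.
Proof. apply pow_lt. lra. Qed.

Lemma xk_nonneg k : 0 <= xk k.
Proof.
  destruct (classic (exists t, Tf k t <> 0%nat)) as [H|H].
  - destruct (least_ex (fun t => Tf k t <> 0%nat)) as [t [A B]]; auto.
    + intros t; destruct (Nat.eq_dec (Tf k t) 0%nat); auto.
    + rewrite (xk_some k t); auto. pose proof (pow_half_pos t); lra.
      intros t' Ht'. specialize (B t' Ht'). destruct (Nat.eq_dec (Tf k t') 0%nat); tauto.
  - rewrite xk_none; auto. lra.
Qed.

Lemma xk_pos k : Hk k -> 0 < xk k.
Proof.
  intros H. apply Hk_Tf in H.
  destruct (least_ex (fun t => Tf k t <> 0%nat)) as [t [A B]]; auto.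
  + intros t; destruct (Nat.eq_dec (Tf k t) 0%nat); auto.
  + rewrite (xk_some k t); auto. apply pow_half_pos.
    intros t' Ht'. specialize (B t' Ht'). destruct (Nat.eq_dec (Tf k t') 0%nat); tauto.
Qed.

Lemma xk_zero k : ~ Hk k -> xk k = 0.
Proof. intros H. apply xk_none. rewrite <- Hk_Tf. auto. Qed.

Open Scope nat_scope.

(* d-approximation, env [k; i; j; J] *)
Definition FoundTE := Bex (V 3) TE.
Definition LeastE := Count (V 3) (NotE (Bex (Sx (V 0)) (Sh1 TE))).
Definition Cond01 := AndE (Eqb (V 1) (C 0)) (Eqb (V 2) (C 1)).
Definition AOther := Ifz (Eqb (V 1) (C 0)) (Ifz (Eqb (V 1) (C 1)) (C 0) (Ifz (Eqb (V 2) (C 1)) (C 1) (C 0)))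
   (Ifz (Eqb (V 2) (C 0)) (C 1) (C 0)).
Definition AE := Ifz Cond01 AOther (Ifz FoundTE (C 0) (C 1)).
Definition BE := Ifz Cond01 (C 0) (Pred (Pow2 LeastE)).

Lemma den_FoundTE k i j J : den FoundTE [k; i; j; J] <> 0 <-> exists t, t < J /\ Tf k t <> 0.
Proof.
  unfold FoundTE. rewrite den_Bex. cbn [den nth]. split; intros [t [A B]]; exists t; split; auto.
Qed.

Lemma den_LeastE k i j J t0 : Tf k t0 <> 0 -> (forall t', t' < t0 -> Tf k t' = 0) -> t0 < J ->
  den LeastE [k; i; j; J] = t0.
Proof.
  intros H1 H2 H3. unfold LeastE. rewrite den_Count. cbn [den nth].
  rewrite (cnt_min _ _ t0); [lia|]. intros t. rewrite den_Not. split.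
  - intros H. destruct (Nat.lt_ge_cases t t0); auto. exfalso.
    assert (exists i0, i0 < S t /\ den TE (i0 :: k :: [i; j; J]) <> 0) as HH.
    { exists t0. split; [lia|]. apply (proj2 (Tf_indep k t0 [i; j; J])); auto. }
    destruct (den (Bex (Sx (V 0)) (Sh1 TE)) (t :: [k; i; j; J])) eqn:E; [|congruence].
    assert (den (Bex (Sx (V 0)) (Sh1 TE)) (t :: [k; i; j; J]) <> 0); [|congruence].
    apply den_Bex. cbn [den nth]. destruct HH as [i0 [A B]]. exists i0. split; auto.
  - intros Ht. destruct (den (Bex (Sx (V 0)) (Sh1 TE)) (t :: [k; i; j; J])) eqn:E; auto.
    exfalso. assert (den (Bex (Sx (V 0)) (Sh1 TE)) (t :: [k; i; j; J]) <> 0) as HB by congruence.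
    apply den_Bex in HB. cbn [den nth] in HB. destruct HB as [i0 [A B]].
    apply (proj1 (Tf_indep k i0 [i; j; J])) in B. apply B. apply H2. lia.
Qed.

Open Scope R_scope.
Lemma qof0 a b : qof 0 a b = INR a / INR (S b).
Proof. unfold qof. simpl. lra. Qed.

Lemma half_pow_le t N : (N <= t)%nat -> (/ 2) ^ t <= (/ 2) ^ N.
Proof.
  intros H. rewrite !pow_inv. apply Rinv_le_contravar. apply pow_lt; lra. apply Rle_pow; auto; lra.
Qed.

Lemma xk_small k J : ~ (exists t, (t < J)%nat /\ Tf k t <> 0%nat) -> xk k <= (/ 2) ^ J.
Proof.
  intros H. destruct (classic (exists t, Tf k t <> 0%nat)) as [H'|H'].
  - destruct (least_ex (fun t => Tf k t <> 0%nat)) as [t [A B]]; auto.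
    + intros t; destruct (Nat.eq_dec (Tf k t) 0%nat); auto.
    + rewrite (xk_some k t); auto.
      * apply half_pow_le. destruct (Nat.lt_ge_cases t J); auto. exfalso; apply H; eauto.
      * intros t' Ht'. specialize (B t' Ht'). destruct (Nat.eq_dec (Tf k t') 0%nat); tauto.
  - rewrite xk_none; auto. pose proof (pow_half_pos J); lra.
Qed.

Lemma pow2_INR t : INR (S (Nat.pred (2 ^ t))) = 2 ^ t.
Proof.
  assert (2 ^ t <> 0)%nat by (apply Nat.pow_nonzero; lia).
  replace (S (Nat.pred (2 ^ t))) with (2 ^ t)%nat by lia. rewrite pow_INR. replace (INR 2) with 2 by (simpl; lra). reflexivity.
Qed.

Lemma aother_ok x k i j J : ~ (i = 0%nat /\ j = 1%nat) -> dfun x i j = INR (den AOther [k; i; j; J]).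
Proof.
  intros H. unfold AOther. rewrite !den_Ifz, !den_Eqb. cbn [den nth].
  destruct i as [|[|i]]; destruct j as [|[|j]]; try (exfalso; apply H; auto; fail);
  unfold dfun; simpl; try reflexivity.
Qed.

Lemma d_family m n : comp_family 3 (fun v => (nth 1 v 0 < m)%nat /\ (nth 2 v 0 < n)%nat)
  (fun v => dfun (xk (nth 0 v 0%nat)) (nth 1 v 0%nat) (nth 2 v 0%nat)).
Proof.
  exists (den (C 0)), (den AE), (den BE), (den (V 3)). repeat split; try apply den_rec.
  intros v Hv Hdom N J HJ. destruct v as [|k [|i [|j [|? ?]]]]; simpl in Hv; try lia. clear Hv Hdom.
  cbn [app] in *. cbn [den nth] in HJ |- *. rewrite qof0.
  unfold AE, BE. rewrite !den_Ifz. unfold Cond01. rewrite den_And_val, !den_Eqb. cbn [den nth].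
  destruct (classic (i = 0%nat /\ j = 1%nat)) as [[-> ->]|Hij].
  - simpl b2n. cbn [Nat.eqb ifz]. unfold dfun at 1. simpl Nat.eqb. cbv iota.
    destruct (Nat.eq_dec (den FoundTE [k; 0%nat; 1%nat; J]) 0%nat) as [E|E].
    + rewrite E. cbn [ifz]. rewrite INR_0. unfold Rdiv; rewrite Rmult_0_l, Rminus_0_r.
      rewrite Rabs_right by (apply Rle_ge, xk_nonneg).
      assert (~ exists t, (t < J)%nat /\ Tf k t <> 0%nat) as NF.
      { intros HH. apply (proj2 (den_FoundTE k 0 1 J)) in HH. auto. }
      eapply Rle_trans. apply xk_small; eauto. apply half_pow_le; auto.
    + pose proof E as E0. apply den_FoundTE in E.
      destruct (den FoundTE [k; 0%nat; 1%nat; J]) eqn:EF; [congruence|]. cbn [ifz]. destruct (least_ex (fun t => Tf k t <> 0%nat)) as [t0 [A B]].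
      { intros t; destruct (Nat.eq_dec (Tf k t) 0%nat); auto. }
      { destruct E as [t [_ Ht]]; eauto. }
      assert (B' : forall t', (t' < t0)%nat -> Tf k t' = 0%nat).
      { intros t' Ht'. specialize (B t' Ht'). destruct (Nat.eq_dec (Tf k t') 0%nat); tauto. }
      assert (t0 < J)%nat.
      { destruct E as [t [Ht1 Ht2]]. destruct (Nat.lt_ge_cases t0 J); auto.
        exfalso. apply Ht2. apply B'. lia. }
      rewrite den_Pred, den_Pow2, (den_LeastE k 0 1 J t0); auto. rewrite pow2_INR, (xk_some k t0); auto.
      rewrite pow_inv. simpl INR. replace ((/ 2 ^ t0) - 1 / 2 ^ t0) with 0 by (field; apply pow_nonzero; lra).
      rewrite Rabs_R0. apply Rlt_le, pow_half_pos.
  - replace (if b2n (i =? 0)%nat =? 0 then 0%nat else if b2n (j =? 1)%nat =? 0 then 0%nat else 1%nat) with 0%nat.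
    2:{ destruct (Nat.eqb_spec i 0); destruct (Nat.eqb_spec j 1); simpl; auto. exfalso; auto. }
    cbn [ifz]. rewrite <- (aother_ok (xk k) k i j J Hij). simpl INR. unfold Rdiv. rewrite Rinv_1, Rmult_1_r.
    rewrite Rminus_diag, Rabs_R0. apply Rlt_le, pow_half_pos.
Qed.

Open Scope R_scope.

Lemma rc_fix k v0 g : length v0 = k -> recursive (S k) g -> recursive 1 (fun u => g (v0 ++ [nth 0 u 0%nat])).
Proof.
  intros Hl Hg.
  set (fs := map (fun c (_ : list nat) => c) v0 ++ [fun u => nth 0 u 0%nat]).
  assert (Hfs : Forall (recursive 1) fs).
  { unfold fs. apply Forall_app. split. clear. induction v0; simpl; constructor; auto. apply rc_const.
    constructor; [apply rc_proj|constructor]. }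
  assert (Hlen : length fs = S k) by (unfold fs; rewrite length_app, length_map; simpl; lia).
  assert (Hmap : forall u, map (fun g => g u) fs = v0 ++ [nth 0 u 0%nat]).
  { intros u. unfold fs. rewrite map_app. simpl. f_equal. clear. induction v0; simpl; f_equal; auto. }
  apply rc_ext with (f := fun u => g (map (fun g => g u) fs)).
  apply (rc_comp (S k) 1 g fs Hg Hfs Hlen). intros u _; rewrite Hmap; reflexivity.
Qed.

Lemma comp_point k dom f v0 : comp_family k dom f -> length v0 = k -> dom v0 -> comp_real (f v0).
Proof.
  intros [s [a [b [e [Hs [Ha [Hb [He H]]]]]]]] Hl Hd.
  exists (fun u => s (v0 ++ [nth 0 u 0%nat])), (fun u => a (v0 ++ [nth 0 u 0%nat])),
         (fun u => b (v0 ++ [nth 0 u 0%nat])), (fun u => e (v0 ++ [nth 0 u 0%nat])).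
  repeat split; try (apply (rc_fix k); auto).
  intros v Hv _ N j Hj. apply len0 in Hv. subst v. simpl in Hj |- *. apply H; auto.
Qed.

Lemma comp_real_nat c : comp_real (INR c).
Proof.
  exists (fun _ => 0%nat), (fun _ => c), (fun _ => 0%nat), (fun _ => 0%nat).
  repeat split; try apply rc_const.
  intros v _ _ N j _. rewrite qof0. simpl INR. unfold Rdiv. rewrite Rinv_1, Rmult_1_r, Rminus_diag, Rabs_R0.
  apply pow_le. lra.
Qed.

Lemma P_family m : comp_family 2 (fun v => (nth 1 v 0 < m)%nat) (fun v => Pfun (nth 1 v 0%nat)).
Proof.
  exists (den (C 0)), (den (Leb (V 1) (C 1))), (den (C 1)), (den (C 0)). repeat split; try apply den_rec.
  intros v Hv _ N J _. destruct v as [|k [|i [|? ?]]]; simpl in Hv; try lia.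
  cbn [app]. rewrite den_Leb. cbn [den nth]. rewrite qof0. unfold Pfun.
  destruct (Nat.leb_spec i 1); [replace (i <? 2)%nat with true by (symmetry; apply Nat.ltb_lt; lia)
    |replace (i <? 2)%nat with false by (symmetry; apply Nat.ltb_ge; lia)]; simpl.
  - replace (/ 2 - 1 / (1 + 1)) with 0 by field. rewrite Rabs_R0. apply pow_le; lra.
  - replace (0 - 0 / (1 + 1)) with 0 by field. rewrite Rabs_R0. apply pow_le; lra.
Qed.

Lemma D_family : comp_family 1 (fun _ => True) (fun v => (fun _ : nat => 0) (nth 0 v 0%nat)).
Proof.
  exists (den (C 0)), (den (C 0)), (den (C 0)), (den (C 0)). repeat split; try apply den_rec.
  intros v _ _ N J _. cbn [den]. rewrite qof0. simpl. replace (0 - 0 / 1) with 0 by field.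
  rewrite Rabs_R0. apply pow_le; lra.
Qed.

Lemma Pfun_comp m : (2 <= m)%nat -> comp_distr m Pfun.
Proof.
  intros Hm. split. apply Pfun_distr; auto. intros i Hi.
  apply (comp_point 2 _ (fun v => Pfun (nth 1 v 0%nat)) [0%nat; i] (P_family m)); simpl; auto.
Qed.

Lemma Pfun_nontriv m : nontrivial m Pfun.
Proof. intros [i [_ H]]. unfold Pfun in H. destruct (i <? 2)%nat; lra. Qed.

Lemma adm_k m n k : (2 <= m)%nat -> (2 <= n)%nat -> admissible m n Pfun (dfun (xk k)) 0.
Proof.
  intros Hm Hn. split; [apply Pfun_comp; auto|]. split; [apply Pfun_nontriv|]. split; [|split].
  - intros i j Hi Hj. split. apply dfun_nonneg, xk_nonneg.
    apply (comp_point 3 _ (fun v => dfun (xk (nth 0 v 0%nat)) (nth 1 v 0%nat) (nth 2 v 0%nat)) [k; i; j] (d_family m n)); simpl; auto.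
  - replace 0 with (INR 0) by reflexivity. apply comp_real_nat.
  - pose proof (xk_nonneg k). destruct (Req_EM_T (xk k) 0) as [E|E].
    + rewrite E. exists (Wa 0). apply opt_zero; auto.
    + exists (Wa 1). apply opt_pos; auto; lra.
Qed.

Lemma adm_tie m n : (2 <= m)%nat -> (2 <= n)%nat -> admissible m n Pfun (dfun 0) 0.
Proof.
  intros Hm Hn. split; [apply Pfun_comp; auto|]. split; [apply Pfun_nontriv|]. split; [|split].
  - intros i j Hi Hj. split. apply dfun_nonneg; lra.
    destruct (classic (i = 0%nat /\ j = 1%nat)) as [[-> ->]|Hij].
    + unfold dfun; simpl. replace 0 with (INR 0) by reflexivity. apply comp_real_nat.
    + rewrite (aother_ok 0 0 i j 0 Hij). apply comp_real_nat.
  - replace 0 with (INR 0) by reflexivity. apply comp_real_nat.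
  - exists (Wa 0). apply opt_zero; auto.
Qed.

Open Scope R_scope.

Definition GE (N0 : nat) := AndE (NotE (Par (V 0)))
  (Leb (Sx (Mul (C (2 ^ N0 - 2)) (Sx (V 2)))) (Mul (V 1) (C (2 ^ N0)))).

Lemma den_GE N0 S A B : den (GE N0) [S; A; B] <> 0%nat <->
  Nat.even S = true /\ ((2 ^ N0 - 2) * Datatypes.S B < A * 2 ^ N0)%nat.
Proof.
  unfold GE. rewrite den_And, den_Not, den_Par, den_Leb_t. cbn [den nth]. rewrite !den_Mul. cbn [den nth].
  destruct (Nat.even S); split; intros [H1 H2]; split; try congruence; auto.
Qed.

Lemma Rabs_le_inv x y : Rabs x <= y -> - y <= x <= y.
Proof. intros H. destruct (Rcase_abs x); [rewrite Rabs_left in H|rewrite Rabs_right in H]; auto; lra. Qed.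

Lemma frac_cmp (A Bp p : R) : 0 < Bp -> 0 < p -> ((p - 2) / p < A / Bp <-> (p - 2) * Bp < A * p).
Proof.
  intros HB Hp. split; intros H.
  - apply (Rmult_lt_compat_r (Bp * p)) in H; [|nra].
    replace ((p - 2) / p * (Bp * p)) with ((p - 2) * Bp) in H by (field; lra).
    replace (A / Bp * (Bp * p)) with (A * p) in H by (field; lra). exact H.
  - apply (Rmult_lt_reg_r (Bp * p)); [nra|].
    replace ((p - 2) / p * (Bp * p)) with ((p - 2) * Bp) by (field; lra).
    replace (A / Bp * (Bp * p)) with (A * p) by (field; lra). exact H.
Qed.

Theorem mainTheorem1 (m n : nat) (Hm : (2 <= m)%nat) (Hn : (2 <= n)%nat)
  (F : OptFun m n) :
  in_M m n F -> ~ BM_computable m n F.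
Proof.
  intros HM HBM.
  pose proof (HBM (fun _ => Pfun) (fun k => dfun (xk k)) (fun _ => 0)
    (P_family m) (d_family m n) D_family (fun k => adm_k m n k Hm Hn)) as HO.
  destruct HO as [s [a [b [e [Hs [Ha [Hb [He HO]]]]]]]].
  set (astar := F Pfun (dfun 0) 0 0%nat 0%nat).
  assert (Hast : 0 <= astar < 1) by (apply (out_zero m n); auto; apply HM, adm_tie; auto).
  assert (HW1 : forall k, Hk k -> F Pfun (dfun (xk k)) 0 0%nat 0%nat = 1).
  { intros k Hk'. apply (out_pos m n (xk k)); auto. apply xk_pos; auto. apply HM, adm_k; auto. }
  assert (HW0 : forall k, ~ Hk k -> F Pfun (dfun (xk k)) 0 0%nat 0%nat = astar).
  { intros k Hk'. rewrite xk_zero; auto. }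
  destruct (pow_lt_1_zero (/ 2) ltac:(rewrite Rabs_right; lra) ((1 - astar) / 4) ltac:(lra)) as [N1 HN1].
  set (N0 := Nat.max N1 2).
  assert (Heps : (/ 2) ^ N0 < (1 - astar) / 4).
  { specialize (HN1 N0 ltac:(unfold N0; lia)). rewrite Rabs_right in HN1; auto. apply Rle_ge, pow_le; lra. }
  assert (Hepspos : 0 < (/ 2) ^ N0) by (apply pow_lt; lra).
  set (p := INR (2 ^ N0)).
  assert (Hp : (/ 2) ^ N0 = / p).
  { unfold p. rewrite pow_INR, pow_inv. replace (INR 2) with 2 by (simpl; lra). reflexivity. }
  assert (Hp4 : 4 <= p).
  { unfold p. replace 4 with (INR (2 ^ 2)) by (simpl; lra). apply le_INR. apply Nat.pow_le_mono_r; unfold N0; lia. }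
  set (ef := fun u : list nat => e [nth 0 u 0%nat; 0%nat; 0%nat; N0]).
  set (arg := fun u : list nat => [nth 0 u 0%nat; 0%nat; 0%nat; ef u]).
  set (delta := fun u => den (GE N0) [s (arg u); a (arg u); b (arg u)]).
  assert (Hrec_e : recursive 1 ef).
  { apply rc_ext with (f := fun u => e (map (fun g => g u)
        [fun u => nth 0 u 0%nat; fun _ => 0%nat; fun _ => 0%nat; fun _ => N0])).
    apply (rc_comp 4 1); auto. repeat constructor; first [apply rc_proj | apply rc_const].
    intros; reflexivity. }
  assert (Hrec_arg : forall g, recursive 4 g -> recursive 1 (fun u => g (arg u))).
  { intros g Hg. apply rc_ext with (f := fun u => g (map (fun h => h u)
        [fun u => nth 0 u 0%nat; fun _ => 0%nat; fun _ => 0%nat; ef])).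
    apply (rc_comp 4 1); auto. repeat constructor; first [apply rc_proj | apply rc_const | exact Hrec_e].
    intros; reflexivity. }
  assert (Hrec : recursive 1 delta).
  { apply rc_ext with (f := fun u => den (GE N0) (map (fun h => h u)
        [fun u => s (arg u); fun u => a (arg u); fun u => b (arg u)])).
    - apply (rc_comp 3 1); [apply den_rec | repeat constructor; apply Hrec_arg; auto | reflexivity].
    - intros; reflexivity. }
  apply undecidable. exists delta. split; auto.
  intros k.
  set (J := ef [k]). set (S0 := s (arg [k])). set (A0 := a (arg [k])). set (B0 := b (arg [k])).
  assert (Happ : Rabs (F Pfun (dfun (xk k)) 0 0%nat 0%nat - qof S0 A0 B0) <= (/ 2) ^ N0).
  { apply (HO [k; 0%nat; 0%nat]); simpl; auto; try lia. }
  assert (Hd : delta [k] <> 0%nat <-> Nat.even S0 = true /\ ((2 ^ N0 - 2) * Datatypes.S B0 < A0 * 2 ^ N0)%nat).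
  { exact (den_GE N0 S0 A0 B0). }
  assert (HBp : 0 < INR (Datatypes.S B0)) by (apply lt_0_INR; lia).
  assert (Hconv : ((2 ^ N0 - 2) * Datatypes.S B0 < A0 * 2 ^ N0)%nat <-> (p - 2) / p < INR A0 / INR (Datatypes.S B0)).
  { rewrite frac_cmp by lra. split; intros H.
    - apply lt_INR in H. rewrite !mult_INR, minus_INR in H. fold p in H. simpl (INR 2) in H. lra.
      apply (Nat.le_trans _ (2 ^ 2)); [simpl; lia|]. apply Nat.pow_le_mono_r; unfold N0; lia.
    - apply INR_lt. rewrite !mult_INR, minus_INR. fold p. simpl (INR 2). lra.
      apply (Nat.le_trans _ (2 ^ 2)); [simpl; lia|]. apply Nat.pow_le_mono_r; unfold N0; lia. }
  rewrite Hd, Hconv. unfold qof in Happ. rewrite Hp in Happ, Heps.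
  assert (HAB : 0 <= INR A0 / INR (Datatypes.S B0)).
  { unfold Rdiv. apply Rmult_le_pos. apply pos_INR. left; apply Rinv_0_lt_compat; auto. }
  split.
  - intros Hk'. rewrite HW1 in Happ; auto.
    destruct (Nat.even S0); [|exfalso].
    + split; auto. apply Rabs_le_inv in Happ. replace ((p - 2) / p) with (1 - 2 * / p) by (field; lra).
      assert (0 < / p) by (apply Rinv_0_lt_compat; lra). unfold Rdiv in *. lra.
    + apply Rabs_le_inv in Happ. assert (/ p <= / 4) by (apply Rinv_le_contravar; lra).
      unfold Rdiv in *. lra.
  - intros [Hev Hlt]. destruct (classic (Hk k)) as [?|Hnk]; auto. exfalso.
    rewrite HW0 in Happ; auto. rewrite Hev in Happ. apply Rabs_le_inv in Happ.
    replace ((p - 2) / p) with (1 - 2 * / p) in Hlt by (field; lra).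
    unfold Rdiv in *. lra.
Qed.
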